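(* Let $K,N$ be symmetric homogeneous stable means and $M$ a symmetric homogeneous mean, all having symmetric asymptotic expansions with coefficients $(a^K_n),(a^N_n),(a^M_n)$. If $M$ is simultaneously $(K,N)$-stabilizable and $(K,N)$-stabilized, then $a^K_1=a^N_1=a^M_1$, hence $a^K_n=a^N_n$ for all $n\in\mathbb N_0$, and $a^M_2=\frac16a^M_1(1+a^M_1)(1-4a^M_1)$.
   Context: A bi-variate mean is $M:(0,\infty)^2\to(0,\infty)$ with $\min\le M\le\max$; symmetric and homogeneous (degree 1). $M$ is stable if $M(s,t)=M\big(M(s,M(s,t)),M(M(s,t),t)\big)$. For stable $K,N$: $M$ is $(K,N)$-stabilizable if $M(s,t)=K\big(M(s,N(s,t)),M(N(s,t),t)\big)$, and $(K,N)$-stabilized if $M(s,t)=K\big(N(s,M(s,t)),N(M(s,t),t)\big)$, for all $s,t>0$. A mean has a symmetric asymptotic expansion with coefficients $(a_n)$ if for every fixed real $t$ and $N\ge0$, $M(x-t,x+t)=\sum_{n=0}^Na_nt^{2n}x^{-2n+1}+o(x^{-2N+1})$ as $x\to\infty$. *)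

(* Defs.v *)
From Stdlib Require Import Reals Lra.
Open Scope R_scope.

(* A bivariate mean is represented by a total function M : R -> R -> R;
   only its values on (0,oo)^2 are constrained. *)
Definition is_mean (M : R -> R -> R) : Prop :=
  forall s t, 0 < s -> 0 < t -> 0 < M s t /\ Rmin s t <= M s t <= Rmax s t.

Definition symmetric_mean (M : R -> R -> R) : Prop :=
  forall s t, 0 < s -> 0 < t -> M s t = M t s.

Definition homogeneous_mean (M : R -> R -> R) : Prop :=
  forall l s t, 0 < l -> 0 < s -> 0 < t -> M (l * s) (l * t) = l * M s t.

Definition stable_mean (M : R -> R -> R) : Prop :=
  forall s t, 0 < s -> 0 < t -> M s t = M (M s (M s t)) (M (M s t) t).

Definition stabilizable (K N M : R -> R -> R) : Prop :=
  forall s t, 0 < s -> 0 < t -> M s t = K (M s (N s t)) (M (N s t) t).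

Definition stabilized (K N M : R -> R -> R) : Prop :=
  forall s t, 0 < s -> 0 < t -> M s t = K (N s (M s t)) (N (M s t) t).

Definition xpow (x : R) (n : nat) : R := x / x ^ (2 * n).

Definition sym_asymp_expansion (M : R -> R -> R) (a : nat -> R) : Prop :=
  forall (t : R) (Nn : nat) (eps : R), 0 < eps ->
    exists X : R, forall x : R, X < x ->
      Rabs (M (x - t) (x + t)
            - sum_f_R0 (fun n => a n * t ^ (2 * n) * xpow x n) Nn)
        <= eps * Rabs (xpow x Nn).

(* Main.v *)
Require Import Defs.
From Stdlib Require Import Reals Lra Lia Psatz.
Open Scope R_scope.

Definition Lo (k:nat) (f:R->R) : Prop :=
  forall eps, 0<eps -> exists d, 0<d /\ forall u, 0<u<d -> Rabs (f u) <= eps * u^k.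
Definition BO (k:nat) (f:R->R) : Prop :=
  exists C d, 0<d /\ forall u, 0<u<d -> Rabs (f u) <= C * u^k.

Lemma Lo_ext k f g : (exists d0, 0<d0 /\ forall u, 0<u<d0 -> f u = g u) -> Lo k f -> Lo k g.
Proof.
  intros [d0 [Hd0 He]] H eps He'. destruct (H eps He') as [d [Hd Hf]].
  exists (Rmin d d0). split. apply Rmin_pos; lra. intros u Hu.
  assert (u<d) by (apply Rlt_le_trans with (1:=proj2 Hu); apply Rmin_l).
  assert (u<d0) by (apply Rlt_le_trans with (1:=proj2 Hu); apply Rmin_r).
  rewrite <- He by lra. apply Hf; lra.
Qed.

Lemma BO_ext k f g : (exists d0, 0<d0 /\ forall u, 0<u<d0 -> f u = g u) -> BO k f -> BO k g.
Proof.
  intros [d0 [Hd0 He]] [C [d [Hd Hf]]]. exists C, (Rmin d d0). split. apply Rmin_pos; lra. intros u Hu.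
  assert (u<d) by (apply Rlt_le_trans with (1:=proj2 Hu); apply Rmin_l).
  assert (u<d0) by (apply Rlt_le_trans with (1:=proj2 Hu); apply Rmin_r).
  rewrite <- He by lra. apply Hf; lra.
Qed.

Lemma Lo_plus k f g : Lo k f -> Lo k g -> Lo k (fun u => f u + g u).
Proof.
  intros Hf Hg eps He. destruct (Hf (eps/2)) as [d1 [H1 F1]]; [lra|].
  destruct (Hg (eps/2)) as [d2 [H2 F2]]; [lra|].
  exists (Rmin d1 d2). split. apply Rmin_pos; lra. intros u Hu.
  assert (u<d1) by (apply Rlt_le_trans with (1:=proj2 Hu); apply Rmin_l).
  assert (u<d2) by (apply Rlt_le_trans with (1:=proj2 Hu); apply Rmin_r).
  specialize (F1 u ltac:(lra)). specialize (F2 u ltac:(lra)).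
  eapply Rle_trans. apply Rabs_triang. lra.
Qed.

Lemma Lo_scal k c f : Lo k f -> Lo k (fun u => c * f u).
Proof.
  intros Hf eps He. destruct (Hf (eps/(Rabs c+1))) as [d [H1 F1]].
  apply Rdiv_lt_0_compat; [lra| pose proof (Rabs_pos c); lra].
  exists d. split; auto. intros u Hu. specialize (F1 u Hu).
  rewrite Rabs_mult. pose proof (Rabs_pos c). pose proof (pow_le u k ltac:(lra)).
  apply Rle_trans with (Rabs c * (eps / (Rabs c + 1) * u ^ k)).
  apply Rmult_le_compat_l; auto.
  apply Rle_trans with ((Rabs c +1) * (eps / (Rabs c + 1) * u ^ k)).
  apply Rmult_le_compat_r. apply Rmult_le_pos; [|auto]. apply Rlt_le, Rdiv_lt_0_compat; lra. lra.
  right. field. lra.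
Qed.

Lemma Lo_opp k f : Lo k f -> Lo k (fun u => - f u).
Proof. intros H. apply Lo_ext with (fun u => -1 * f u). exists 1; split; [lra|intros; ring]. apply Lo_scal; auto. Qed.

Lemma Lo_minus k f g : Lo k f -> Lo k g -> Lo k (fun u => f u - g u).
Proof. intros. apply Lo_plus; auto. apply Lo_opp; auto. Qed.

Lemma BO_plus k f g : BO k f -> BO k g -> BO k (fun u => f u + g u).
Proof.
  intros [C1 [d1 [H1 F1]]] [C2 [d2 [H2 F2]]]. exists (C1+C2), (Rmin d1 d2). split. apply Rmin_pos; lra. intros u Hu.
  assert (u<d1) by (apply Rlt_le_trans with (1:=proj2 Hu); apply Rmin_l).
  assert (u<d2) by (apply Rlt_le_trans with (1:=proj2 Hu); apply Rmin_r).
  specialize (F1 u ltac:(lra)). specialize (F2 u ltac:(lra)).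
  eapply Rle_trans. apply Rabs_triang. lra.
Qed.

Lemma BO_mul j k f g : BO j f -> BO k g -> BO (j+k) (fun u => f u * g u).
Proof.
  intros [C1 [d1 [H1 F1]]] [C2 [d2 [H2 F2]]]. exists (C1*C2), (Rmin d1 d2). split. apply Rmin_pos; lra. intros u Hu.
  assert (u<d1) by (apply Rlt_le_trans with (1:=proj2 Hu); apply Rmin_l).
  assert (u<d2) by (apply Rlt_le_trans with (1:=proj2 Hu); apply Rmin_r).
  specialize (F1 u ltac:(lra)). specialize (F2 u ltac:(lra)).
  rewrite Rabs_mult, pow_add.
  replace (C1 * C2 * (u ^ j * u ^ k)) with ((C1 * u^j) * (C2 * u^k)) by ring.
  apply Rmult_le_compat; auto; apply Rabs_pos.
Qed.

Lemma BO_Lo_mul j k f g : BO j f -> Lo k g -> Lo (j+k) (fun u => f u * g u).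
Proof.
  intros [C1 [d1 [H1 F1]]] Hg eps He.
  destruct (Hg (eps/(Rabs C1+1))) as [d2 [H2 F2]].
  apply Rdiv_lt_0_compat; [lra| pose proof (Rabs_pos C1); lra].
  exists (Rmin d1 d2). split. apply Rmin_pos; lra. intros u Hu.
  assert (u<d1) by (apply Rlt_le_trans with (1:=proj2 Hu); apply Rmin_l).
  assert (u<d2) by (apply Rlt_le_trans with (1:=proj2 Hu); apply Rmin_r).
  specialize (F1 u ltac:(lra)). specialize (F2 u ltac:(lra)).
  pose proof (pow_le u j ltac:(lra)). pose proof (pow_le u k ltac:(lra)).
  rewrite Rabs_mult, pow_add.
  apply Rle_trans with ((Rabs C1 * u^j) * (eps / (Rabs C1 + 1) * u ^ k)).
  apply Rmult_le_compat; try apply Rabs_pos; auto.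
  apply Rle_trans with (1:=F1). apply Rmult_le_compat_r; auto. apply Rle_abs.
  pose proof (Rabs_pos C1).
  apply Rle_trans with (((Rabs C1 +1) * (eps / (Rabs C1 + 1))) * (u^j * u ^ k)).
  replace (Rabs C1 * u ^ j * (eps / (Rabs C1 + 1) * u ^ k)) with
     ((Rabs C1 * (eps / (Rabs C1 + 1))) * (u^j*u^k)) by ring.
  apply Rmult_le_compat_r. apply Rmult_le_pos; auto.
  apply Rmult_le_compat_r. apply Rlt_le, Rdiv_lt_0_compat; lra. lra.
  right. field. lra.
Qed.

Lemma Lo_BO_mul j k f g : Lo j f -> BO k g -> Lo (j+k) (fun u => f u * g u).
Proof.
  intros. apply Lo_ext with (fun u => g u * f u). exists 1; split; [lra|intros; ring].
  rewrite Nat.add_comm. apply BO_Lo_mul; auto.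
Qed.

Lemma BO_succ_Lo k f : BO (S k) f -> Lo k f.
Proof.
  intros [C [d [H1 F1]]] eps He. exists (Rmin d (eps/(Rabs C+1))). split.
  apply Rmin_pos; auto. apply Rdiv_lt_0_compat; [lra| pose proof (Rabs_pos C); lra].
  intros u Hu.
  assert (u<d) by (apply Rlt_le_trans with (1:=proj2 Hu); apply Rmin_l).
  assert (u<eps/(Rabs C+1)) by (apply Rlt_le_trans with (1:=proj2 Hu); apply Rmin_r).
  specialize (F1 u ltac:(lra)). simpl in F1.
  pose proof (pow_le u k ltac:(lra)). pose proof (Rabs_pos C).
  apply Rle_trans with (1:=F1).
  assert (u * (Rabs C + 1) < eps).
  { apply Rmult_lt_reg_r with (/(Rabs C+1)). apply Rinv_0_lt_compat; lra.
    rewrite Rmult_assoc, Rinv_r by lra. lra. }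
  apply Rle_trans with ((Rabs C * u) * u^k).
  rewrite <- Rmult_assoc. apply Rmult_le_compat_r; auto. apply Rmult_le_compat_r; [lra|apply Rle_abs].
  apply Rmult_le_compat_r; auto. nra.
Qed.

Lemma Lo_BO k f : Lo k f -> BO k f.
Proof. intros H. destruct (H 1 ltac:(lra)) as [d [Hd F]]. exists 1, d. auto. Qed.

Lemma pow_le1 u n : 0 <= u <= 1 -> u^n <= 1.
Proof. intros H. induction n; simpl. lra. nra. Qed.

Lemma BO_mono j k f : (j <= k)%nat -> BO k f -> BO j f.
Proof.
  intros Hjk [C [d [H1 F1]]]. exists (Rabs C), (Rmin d 1). split. apply Rmin_pos; lra. intros u Hu.
  assert (u<d) by (apply Rlt_le_trans with (1:=proj2 Hu); apply Rmin_l).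
  assert (u<1) by (apply Rlt_le_trans with (1:=proj2 Hu); apply Rmin_r).
  specialize (F1 u ltac:(lra)). apply Rle_trans with (1:=F1).
  replace k with (j + (k-j))%nat by lia. rewrite pow_add.
  pose proof (pow_le u j ltac:(lra)). pose proof (pow_le u (k-j) ltac:(lra)).
  assert (u^(k-j) <= 1) by (apply pow_le1; lra).
  pose proof (Rle_abs C). pose proof (Rabs_pos C).
  apply Rle_trans with (Rabs C * (u^j * u^(k-j))). apply Rmult_le_compat_r. apply Rmult_le_pos; auto. auto.
  apply Rmult_le_compat_l; auto. nra.
Qed.

Lemma Lo_mono j k f : (j <= k)%nat -> Lo k f -> Lo j f.
Proof.
  intros Hjk H eps He. destruct (H eps He) as [d [Hd F1]]. exists (Rmin d 1). split. apply Rmin_pos; lra. intros u Hu.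
  assert (u<d) by (apply Rlt_le_trans with (1:=proj2 Hu); apply Rmin_l).
  assert (u<1) by (apply Rlt_le_trans with (1:=proj2 Hu); apply Rmin_r).
  specialize (F1 u ltac:(lra)). apply Rle_trans with (1:=F1).
  replace k with (j + (k-j))%nat by lia. rewrite pow_add.
  pose proof (pow_le u j ltac:(lra)). pose proof (pow_le u (k-j) ltac:(lra)).
  assert (u^(k-j) <= 1) by (apply pow_le1; lra).
  apply Rmult_le_compat_l. lra. nra.
Qed.

Lemma BO_scal k c f : BO k f -> BO k (fun u => c * f u).
Proof.
  intros H. apply BO_ext with (fun u => (fun _ => c) u * f u). exists 1; split; [lra|intros; ring].
  change k with (0+k)%nat. apply BO_mul; auto. exists (Rabs c), 1. split; [lra|]. intros; simpl; lra.
Qed.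

Lemma BO_opp k f : BO k f -> BO k (fun u => - f u).
Proof. intros H. apply BO_ext with (fun u => -1 * f u). exists 1; split; [lra|intros; ring]. apply BO_scal; auto. Qed.

Lemma BO_minus k f g : BO k f -> BO k g -> BO k (fun u => f u - g u).
Proof. intros. apply BO_plus; auto. apply BO_opp; auto. Qed.

Lemma BO_const c : BO 0 (fun _ => c).
Proof. exists (Rabs c), 1. split; [lra|]. intros; simpl; lra. Qed.

Lemma BO_upow k : BO k (fun u => u^k).
Proof. exists 1, 1. split; [lra|]. intros u Hu. rewrite Rabs_right. lra. apply Rle_ge, pow_le; lra. Qed.

Lemma BO_id : BO 1 (fun u => u).
Proof. apply BO_ext with (fun u => u^1). exists 1; split; [lra|intros; ring]. apply BO_upow. Qed.

Lemma Lo_zero k : Lo k (fun _ => 0).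
Proof. intros eps He. exists 1. split; [lra|]. intros u Hu. rewrite Rabs_R0. apply Rmult_le_pos. lra. apply pow_le; lra. Qed.

Lemma BO_zero k : BO k (fun _ => 0).
Proof. apply Lo_BO, Lo_zero. Qed.

Lemma BO_pow m f : BO 1 f -> BO m (fun u => (f u)^m).
Proof.
  intros H. induction m.
  - apply BO_ext with (fun _ => 1). exists 1; split; [lra|intros; simpl; ring]. apply BO_const.
  - apply BO_ext with (fun u => f u * (f u)^m). exists 1; split; [lra|intros; simpl; ring].
    change (S m) with (1+m)%nat. apply BO_mul; auto.
Qed.

Lemma Lo_coef k kappa : Lo k (fun u => kappa * u^k) -> kappa = 0.
Proof.
  intros H. destruct (Req_dec kappa 0) as [|Hn]; auto. exfalso.
  destruct (H (Rabs kappa/2)) as [d [Hd F]]. apply Rdiv_lt_0_compat; [apply Rabs_pos_lt; auto|lra].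
  specialize (F (d/2) ltac:(lra)). rewrite Rabs_mult in F.
  assert (0 < (d/2)^k) by (apply pow_lt; lra).
  rewrite (Rabs_right ((d/2)^k)) in F by lra.
  pose proof (Rabs_pos_lt kappa Hn). nra.
Qed.

Lemma BO1_away g c0 : 0 < c0 -> BO 1 (fun u => g u - c0) ->
  exists d, 0<d /\ forall u, 0<u<d -> c0/2 <= g u.
Proof.
  intros Hc [C [d [Hd F]]]. exists (Rmin d (c0/(2*(Rabs C+1)))). split.
  apply Rmin_pos; auto. apply Rdiv_lt_0_compat; [lra| pose proof (Rabs_pos C); lra].
  intros u Hu.
  assert (u<d) by (apply Rlt_le_trans with (1:=proj2 Hu); apply Rmin_l).
  assert (u<c0/(2*(Rabs C+1))) by (apply Rlt_le_trans with (1:=proj2 Hu); apply Rmin_r).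
  specialize (F u ltac:(lra)). simpl in F. rewrite Rmult_1_r in F.
  pose proof (Rabs_pos C). pose proof (Rle_abs C).
  assert (u * (2*(Rabs C+1)) < c0).
  { apply Rmult_lt_reg_r with (/(2*(Rabs C+1))). apply Rinv_0_lt_compat; lra.
    rewrite Rmult_assoc, Rinv_r by lra. lra. }
  assert (F1 : -(C*u) <= g u - c0 <= C*u) by (unfold Rabs in F; destruct (Rcase_abs (g u - c0)); lra). nra.
Qed.

Lemma BO_div k f g c0 : 0 < c0 -> BO 1 (fun u => g u - c0) -> BO k f -> BO k (fun u => f u / g u).
Proof.
  intros Hc Hg [C [d [Hd F]]]. destruct (BO1_away g c0 Hc Hg) as [d2 [Hd2 G]].
  exists (Rabs C * (2/c0)), (Rmin d d2). split. apply Rmin_pos; lra. intros u Hu.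
  assert (u<d) by (apply Rlt_le_trans with (1:=proj2 Hu); apply Rmin_l).
  assert (u<d2) by (apply Rlt_le_trans with (1:=proj2 Hu); apply Rmin_r).
  specialize (F u ltac:(lra)). specialize (G u ltac:(lra)).
  unfold Rdiv. rewrite Rabs_mult, Rabs_inv, (Rabs_right (g u)) by lra.
  pose proof (pow_le u k ltac:(lra)). pose proof (Rle_abs C).
  assert (H3: / g u <= 2/c0). { replace (2/c0) with (/(c0/2)) by (field; lra).
    apply Rinv_le_contravar. lra. lra. }
  assert (0 < / g u) by (apply Rinv_0_lt_compat; lra).
  apply Rle_trans with ((C*u^k) * (2/c0)). apply Rmult_le_compat; [apply Rabs_pos|lra|exact F|exact H3].
  assert (0 <= 2/c0) by (apply Rlt_le, Rdiv_lt_0_compat; lra).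
  change (2 * / c0) with (2/c0). generalize dependent (2/c0). intros t _ H5. pose proof (Rmult_le_pos _ _ H5 H1).
  assert (0 <= (Rabs C - C) * (t * u^k)) by (apply Rmult_le_pos; lra). nra.
Qed.

Lemma Lo_div k f g c0 : 0 < c0 -> BO 1 (fun u => g u - c0) -> Lo k f -> Lo k (fun u => f u / g u).
Proof.
  intros Hc Hg Hf. apply Lo_ext with (fun u => f u * (/ g u)). exists 1; split; [lra|intros; unfold Rdiv; ring].
  rewrite <- (Nat.add_0_r k). apply Lo_BO_mul; auto.
  apply BO_ext with (fun u => 1 / g u). exists 1; split; [lra|intros; unfold Rdiv; ring].
  apply BO_div with c0; auto. apply BO_const.
Qed.

Lemma Lo_BO0_mul k f g : Lo k f -> BO 0 g -> Lo k (fun u => f u * g u).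
Proof. intros. pose proof (Lo_BO_mul k 0 f g H H0). rewrite Nat.add_0_r in H1. exact H1. Qed.
Lemma BO0_Lo_mul k f g : BO 0 f -> Lo k g -> Lo k (fun u => f u * g u).
Proof. intros. exact (BO_Lo_mul 0 k f g H H0). Qed.
Lemma BO_BO0_mul k f g : BO k f -> BO 0 g -> BO k (fun u => f u * g u).
Proof. intros. pose proof (BO_mul k 0 f g H H0). rewrite Nat.add_0_r in H1. exact H1. Qed.


Definition Lv (k:nat) (F:R->R) : Prop :=
  forall eps, 0<eps -> exists d, 0<d /\ forall v, Rabs v < d -> Rabs (F v) <= eps * Rabs v ^ k.
Definition Bv (k:nat) (F:R->R) : Prop :=
  exists C d, 0<d /\ forall v, Rabs v < d -> Rabs (F v) <= C * Rabs v ^ k.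

Lemma comp_bound g : BO 1 g -> exists C d, 1 <= C /\ 0 < d /\ forall u, 0<u<d -> Rabs (g u) <= C * u.
Proof.
  intros [C [d [Hd F]]]. exists (Rabs C + 1), d. split. pose proof (Rabs_pos C); lra. split; auto.
  intros u Hu. specialize (F u Hu). simpl in F. pose proof (Rle_abs C). nra.
Qed.

Lemma Lv_comp k F g : Lv k F -> BO 1 g -> Lo k (fun u => F (g u)).
Proof.
  intros HF Hg eps He. destruct (comp_bound g Hg) as [C [d1 [HC [Hd1 G]]]].
  assert (0 < C^k) by (apply pow_lt; lra).
  destruct (HF (eps / C^k)) as [d2 [Hd2 F2]]. apply Rdiv_lt_0_compat; lra.
  exists (Rmin d1 (d2/C)). split. apply Rmin_pos; auto. apply Rdiv_lt_0_compat; lra.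
  intros u Hu.
  assert (u<d1) by (apply Rlt_le_trans with (1:=proj2 Hu); apply Rmin_l).
  assert (u<d2/C) by (apply Rlt_le_trans with (1:=proj2 Hu); apply Rmin_r).
  specialize (G u ltac:(lra)).
  assert (C*u < d2). { apply Rmult_lt_reg_r with (/C). apply Rinv_0_lt_compat; lra.
    replace (C*u*/C) with u by (field; lra). exact H1. }
  specialize (F2 (g u) ltac:(lra)). apply Rle_trans with (1:=F2).
  assert (Rabs (g u) ^ k <= (C*u)^k) by (apply pow_incr; split; [apply Rabs_pos|auto]).
  rewrite Rpow_mult_distr in H3.
  apply Rle_trans with (eps / C ^ k * (C ^ k * u ^ k)).
  apply Rmult_le_compat_l; auto. apply Rlt_le, Rdiv_lt_0_compat; lra.
  right. field. lra.
Qed.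

Lemma Bv_comp k F g : Bv k F -> BO 1 g -> BO k (fun u => F (g u)).
Proof.
  intros [C0 [d2 [Hd2 F2]]] Hg. destruct (comp_bound g Hg) as [C [d1 [HC [Hd1 G]]]].
  exists (Rabs C0 * C^k), (Rmin d1 (d2/C)). split. apply Rmin_pos; auto. apply Rdiv_lt_0_compat; lra.
  intros u Hu.
  assert (u<d1) by (apply Rlt_le_trans with (1:=proj2 Hu); apply Rmin_l).
  assert (u<d2/C) by (apply Rlt_le_trans with (1:=proj2 Hu); apply Rmin_r).
  specialize (G u ltac:(lra)).
  assert (C*u < d2). { apply Rmult_lt_reg_r with (/C). apply Rinv_0_lt_compat; lra.
    replace (C*u*/C) with u by (field; lra). exact H0. }
  specialize (F2 (g u) ltac:(lra)). apply Rle_trans with (1:=F2).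
  assert (Rabs (g u) ^ k <= (C*u)^k) by (apply pow_incr; split; [apply Rabs_pos|auto]).
  rewrite Rpow_mult_distr in H2. pose proof (pow_le (Rabs (g u)) k (Rabs_pos _)).
  apply Rle_trans with (Rabs C0 * Rabs (g u) ^ k). apply Rmult_le_compat_r; auto; apply Rle_abs.
  rewrite Rmult_assoc. apply Rmult_le_compat_l. apply Rabs_pos. auto.
Qed.

Lemma pow_diff_bound x y B m : Rabs x <= B -> Rabs y <= B ->
  Rabs (x^(S m) - y^(S m)) <= INR (S m) * B^m * Rabs (x - y).
Proof.
  intros Hx Hy. induction m.
  - simpl. rewrite !Rmult_1_r. lra.
  - replace (x ^ S (S m) - y ^ S (S m)) with (x * (x^(S m) - y^(S m)) + y^(S m) * (x - y)) by (simpl; ring).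
    eapply Rle_trans. apply Rabs_triang. rewrite !Rabs_mult.
    assert (0 <= B) by (pose proof (Rabs_pos x); lra).
    assert (Rabs y ^ S m <= B ^ S m) by (apply pow_incr; split; [apply Rabs_pos|auto]).
    rewrite RPow_abs in H0.
    pose proof (Rabs_pos (x - y)). pose proof (Rabs_pos x). pose proof (Rabs_pos (x^(S m) - y^(S m))).
    pose proof (pow_le B m H).
    apply Rle_trans with (B * (INR (S m) * B ^ m * Rabs (x - y)) + B^(S m) * Rabs (x-y)).
    apply Rplus_le_compat. apply Rmult_le_compat; auto.
    apply Rmult_le_compat_r; auto.
    rewrite (S_INR (S m)). simpl. right. ring.
Qed.

Lemma BO_powdiff j m f g : BO 1 f -> BO 1 g -> BO j (fun u => f u - g u) ->
  BO (j + m) (fun u => (f u)^(S m) - (g u)^(S m)).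
Proof.
  intros Hf Hg [C3 [d3 [Hd3 F3]]].
  destruct (comp_bound f Hf) as [C1 [d1 [HC1 [Hd1 F1]]]].
  destruct (comp_bound g Hg) as [C2 [d2 [HC2 [Hd2 F2]]]].
  exists (INR (S m) * (C1+C2)^m * Rabs C3), (Rmin d1 (Rmin d2 d3)). split. repeat apply Rmin_pos; auto.
  intros u Hu.
  assert (u<d1) by (apply Rlt_le_trans with (1:=proj2 Hu); apply Rmin_l).
  assert (u<Rmin d2 d3) by (apply Rlt_le_trans with (1:=proj2 Hu); apply Rmin_r).
  assert (u<d2) by (apply Rlt_le_trans with (1:=H0); apply Rmin_l).
  assert (u<d3) by (apply Rlt_le_trans with (1:=H0); apply Rmin_r).
  specialize (F1 u ltac:(lra)). specialize (F2 u ltac:(lra)). specialize (F3 u ltac:(lra)).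
  pose proof (Rabs_pos (f u)). pose proof (Rabs_pos (g u)).
  eapply Rle_trans. apply pow_diff_bound with (B := (C1+C2)*u); nra.
  rewrite Rpow_mult_distr, pow_add.
  pose proof (pos_INR (S m)). pose proof (pow_le (C1+C2) m ltac:(lra)). pose proof (pow_le u m ltac:(lra)).
  pose proof (pow_le u j ltac:(lra)). pose proof (Rle_abs C3).
  assert (Rabs (f u - g u) <= Rabs C3 * u^j) by nra.
  replace (INR (S m) * (C1 + C2) ^ m * Rabs C3 * (u ^ j * u ^ m)) with
    ((INR (S m) * ((C1 + C2) ^ m * u ^ m)) * (Rabs C3 * u ^ j)) by ring.
  apply Rmult_le_compat_l; auto. apply Rmult_le_pos; auto. apply Rmult_le_pos; auto.
Qed.

Lemma Lo_sum k n (f : nat -> R -> R) : (forall i, (i <= n)%nat -> Lo k (f i)) ->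
  Lo k (fun u => sum_f_R0 (fun i => f i u) n).
Proof.
  induction n; intros H.
  - simpl. apply H. lia.
  - simpl. apply Lo_plus. apply IHn. intros; apply H; lia. apply H; lia.
Qed.


Definition Mn (G:R->R) (a b:R) : R := (a+b)/2 * G ((b-a)/(a+b)).

Definition Psum (al:nat->R) (n:nat) (v:R) : R := sum_f_R0 (fun i => al i * v^(2*i)) n.

Lemma BO_sub_lin f a : BO 1 (fun u => f u - a) -> BO 0 f.
Proof.
  intros H. apply BO_ext with (fun u => (f u - a) + a). exists 1; split; [lra|intros; ring].
  apply BO_plus. apply BO_mono with 1%nat; auto. apply BO_const.
Qed.

Lemma core (G1 G2 : R->R) (al:nat->R) (n:nat) (c da db mu : R) (a1 b1 a2 b2 : R -> R) :
  (1 <= n)%nat ->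
  Lv (2*n) (fun v => G1 v - Psum al n v) ->
  Bv 2 (fun v => G1 v - 1) ->
  Lv (2*n) (fun v => G1 v - G2 v - c * v^(2*n)) ->
  Lo (2*n) (fun u => a1 u - a2 u - da * u^(2*n)) ->
  Lo (2*n) (fun u => b1 u - b2 u - db * u^(2*n)) ->
  BO 1 (fun u => a2 u - 1) -> BO 1 (fun u => b2 u - 1) ->
  BO 2 (fun u => (b2 u - a2 u)/(a2 u + b2 u) - mu * u) ->
  Lo (2*n) (fun u => Mn G1 (a1 u) (b1 u) - Mn G2 (a2 u) (b2 u)
                     - ((da+db)/2 + c * mu^(2*n)) * u^(2*n)).
Proof.
  intros Hn He1 Hb1 H12 Ha Hb Ha2 Hb2 Hmu.
  set (v1 := fun u => (b1 u - a1 u)/(a1 u + b1 u)).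
  set (v2 := fun u => (b2 u - a2 u)/(a2 u + b2 u)).
  set (c2 := fun u => (a2 u + b2 u)/2).
  assert (HBa : BO (2*n) (fun u => a1 u - a2 u)).
  { apply BO_ext with (fun u => (a1 u - a2 u - da * u^(2*n)) + da * u^(2*n)).
    exists 1; split; [lra|intros; ring]. apply BO_plus. apply Lo_BO; auto. apply BO_scal, BO_upow. }
  assert (HBb : BO (2*n) (fun u => b1 u - b2 u)).
  { apply BO_ext with (fun u => (b1 u - b2 u - db * u^(2*n)) + db * u^(2*n)).
    exists 1; split; [lra|intros; ring]. apply BO_plus. apply Lo_BO; auto. apply BO_scal, BO_upow. }
  assert (Ha1 : BO 1 (fun u => a1 u - 1)).
  { apply BO_ext with (fun u => (a1 u - a2 u) + (a2 u - 1)). exists 1; split; [lra|intros; ring].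
    apply BO_plus; auto. apply BO_mono with (2*n)%nat; auto; lia. }
  assert (Hb1' : BO 1 (fun u => b1 u - 1)).
  { apply BO_ext with (fun u => (b1 u - b2 u) + (b2 u - 1)). exists 1; split; [lra|intros; ring].
    apply BO_plus; auto. apply BO_mono with (2*n)%nat; auto; lia. }
  assert (Hs1 : BO 1 (fun u => (a1 u + b1 u) - 2)).
  { apply BO_ext with (fun u => (a1 u - 1) + (b1 u - 1)). exists 1; split; [lra|intros; ring].
    apply BO_plus; auto. }
  assert (Hs2 : BO 1 (fun u => (a2 u + b2 u) - 2)).
  { apply BO_ext with (fun u => (a2 u - 1) + (b2 u - 1)). exists 1; split; [lra|intros; ring].
    apply BO_plus; auto. }
  assert (Hc2 : BO 0 c2).
  { apply BO_sub_lin with 1. apply BO_ext with (fun u => /2 * ((a2 u + b2 u) - 2)).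
    exists 1; split; [lra|intros; unfold c2; field]. apply BO_scal; auto. }
  assert (Hc21 : BO 1 (fun u => c2 u - 1)).
  { apply BO_ext with (fun u => /2 * ((a2 u + b2 u) - 2)).
    exists 1; split; [lra|intros; unfold c2; field]. apply BO_scal; auto. }
  assert (Hv2 : BO 1 v2).
  { apply BO_ext with (fun u => ((b2 u - a2 u)/(a2 u + b2 u) - mu * u) + mu * u).
    exists 1; split; [lra|intros; unfold v2; ring]. apply BO_plus. apply BO_mono with 2%nat; auto.
    apply BO_scal, BO_id. }
  assert (Hprod : BO 1 (fun u => (a1 u + b1 u) * (a2 u + b2 u) - 4)).
  { apply BO_ext with (fun u => ((a1 u + b1 u) - 2) * (a2 u + b2 u) + 2 * ((a2 u + b2 u) - 2)).
    exists 1; split; [lra|intros; ring]. apply BO_plus. apply BO_BO0_mul; auto.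
    apply BO_sub_lin with 2; auto. apply BO_scal; auto. }
  destruct (BO1_away _ 2 ltac:(lra) Hs1) as [e1 [He1p E1]].
  destruct (BO1_away _ 2 ltac:(lra) Hs2) as [e2 [He2p E2]].
  assert (Hv12 : BO (2*n) (fun u => v1 u - v2 u)).
  { apply BO_ext with (fun u => (2 * ((b1 u - b2 u) * a2 u - (a1 u - a2 u) * b2 u)) /
                                 ((a1 u + b1 u) * (a2 u + b2 u))).
    exists (Rmin e1 e2). split. apply Rmin_pos; auto. intros u Hu.
    assert (u<e1) by (apply Rlt_le_trans with (1:=proj2 Hu); apply Rmin_l).
    assert (u<e2) by (apply Rlt_le_trans with (1:=proj2 Hu); apply Rmin_r).
    specialize (E1 u ltac:(lra)). specialize (E2 u ltac:(lra)).
    unfold v1, v2. field; repeat split; lra.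
    apply BO_div with 4. lra. auto.
    apply BO_scal. apply BO_minus. apply BO_BO0_mul; auto.
    apply BO_sub_lin with 1; auto.
    apply BO_BO0_mul; auto. apply BO_sub_lin with 1; auto. }
  assert (Hv1 : BO 1 v1).
  { apply BO_ext with (fun u => (v1 u - v2 u) + v2 u). exists 1; split; [lra|intros; ring].
    apply BO_plus; auto. apply BO_mono with (2*n)%nat; auto; lia. }
  assert (HG1v1 : BO 1 (fun u => G1 (v1 u) - 1)).
  { apply BO_mono with 2%nat; [lia|]. apply (Bv_comp 2 (fun v => G1 v - 1) v1); auto. }
  assert (T3 : Lo (2*n) (fun u => G1 (v1 u) - G1 (v2 u))).
  { apply Lo_ext with (fun u => (G1 (v1 u) - Psum al n (v1 u)) - (G1 (v2 u) - Psum al n (v2 u))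
                                + sum_f_R0 (fun i => al i * ((v1 u)^(2*i) - (v2 u)^(2*i))) n).
    exists 1; split; [lra|]. intros u _. unfold Psum.
    assert (forall m, sum_f_R0 (fun i => al i * (v1 u ^ (2 * i) - v2 u ^ (2 * i))) m =
       sum_f_R0 (fun i => al i * v1 u ^ (2 * i)) m - sum_f_R0 (fun i => al i * v2 u ^ (2 * i)) m).
    { induction m. simpl; ring. rewrite !tech5, IHm; ring. }
    cbv beta. rewrite H; ring.
    apply Lo_plus. apply Lo_minus.
    apply (Lv_comp _ (fun v => G1 v - Psum al n v) v1); auto.
    apply (Lv_comp _ (fun v => G1 v - Psum al n v) v2); auto.
    apply Lo_sum. intros i Hi. destruct i.
    - apply Lo_ext with (fun _ => 0). exists 1; split; [lra|intros; simpl; ring]. apply Lo_zero.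
    - apply Lo_scal. apply BO_succ_Lo.
      replace (2 * S i)%nat with (S (2*i+1)) by lia.
      apply BO_mono with (2*n + (2*i+1))%nat. lia. apply BO_powdiff; auto. }
  assert (T4 : Lo (2*n) (fun u => G1 (v2 u) - G2 (v2 u) - c * (v2 u)^(2*n))).
  { apply (Lv_comp _ (fun v => G1 v - G2 v - c * v^(2*n)) v2); auto. }
  assert (T6 : Lo (2*n) (fun u => (v2 u)^(2*n) - (mu*u)^(2*n))).
  { apply BO_succ_Lo. replace (2*n)%nat with (S (2*n-1)) by lia.
    replace (S (S (2*n-1))) with (2 + (2*n-1))%nat by lia. apply BO_powdiff; auto.
    apply BO_scal, BO_id. }
  assert (T5 : Lo (2*n) (fun u => (c2 u - 1) * (v2 u)^(2*n))).
  { apply BO_succ_Lo. change (S (2*n)) with (1 + 2*n)%nat. apply BO_mul; auto. apply BO_pow; auto. }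
  assert (T2 : Lo (2*n) (fun u => u^(2*n) * (G1 (v1 u) - 1))).
  { apply BO_succ_Lo. rewrite <- Nat.add_1_r. apply BO_mul; auto. apply BO_upow. }
  assert (T1 : Lo (2*n) (fun u => ((a1 u + b1 u)/2 - c2 u - (da+db)/2 * u^(2*n)) * G1 (v1 u))).
  { apply Lo_BO0_mul.
    apply Lo_ext with (fun u => /2 * ((a1 u - a2 u - da * u^(2*n)) + (b1 u - b2 u - db * u^(2*n)))).
    exists 1; split; [lra|intros; unfold c2; field]. apply Lo_scal, Lo_plus; auto.
    apply BO_sub_lin with 1; auto. }
  apply Lo_ext with (fun u =>
     ((a1 u + b1 u)/2 - c2 u - (da+db)/2 * u^(2*n)) * G1 (v1 u)
     + (da+db)/2 * (u^(2*n) * (G1 (v1 u) - 1))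
     + c2 u * (G1 (v1 u) - G1 (v2 u))
     + c2 u * (G1 (v2 u) - G2 (v2 u) - c * (v2 u)^(2*n))
     + c * ((c2 u - 1) * (v2 u)^(2*n))
     + c * ((v2 u)^(2*n) - (mu*u)^(2*n))).
  { exists 1; split; [lra|]. intros u _. unfold Mn. fold (v1 u). fold (v2 u). fold (c2 u).
    rewrite Rpow_mult_distr. ring. }
  repeat apply Lo_plus.
  - auto.
  - apply Lo_scal; auto.
  - apply BO0_Lo_mul; auto.
  - apply BO0_Lo_mul; auto.
  - apply Lo_scal; auto.
  - apply Lo_scal; auto.
Qed.


Definition GX (X : R -> R -> R) (v : R) : R := X (1 - v) (1 + v).

Lemma repr X a b : homogeneous_mean X -> 0 < a -> 0 < b -> X a b = Mn (GX X) a b.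
Proof.
  intros HX Ha Hb. unfold Mn, GX.
  set (c := (a+b)/2).
  replace (1 - (b - a)/(a+b)) with (a/c) by (unfold c; field; lra).
  replace (1 + (b - a)/(a+b)) with (b/c) by (unfold c; field; lra).
  rewrite <- HX. f_equal; unfold c; field; lra.
  unfold c; lra. apply Rdiv_lt_0_compat; unfold c; lra. apply Rdiv_lt_0_compat; unfold c; lra.
Qed.

Lemma mean_pos X a b : is_mean X -> 0 < a -> 0 < b -> 0 < X a b.
Proof. intros H Ha Hb. apply (H a b Ha Hb). Qed.

Lemma GX0 X : is_mean X -> GX X 0 = 1.
Proof.
  intros H. unfold GX. destruct (H (1-0) (1+0)) as [_ [H1 H2]]; try lra.
  replace (1-0) with 1 in * by ring. replace (1+0) with 1 in * by ring.
  rewrite Rmin_left in H1 by lra. rewrite Rmax_left in H2 by lra. lra.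
Qed.

Lemma a0_is_1 X al : is_mean X -> sym_asymp_expansion X al -> al 0%nat = 1.
Proof.
  intros Hm He. destruct (Req_dec (al 0%nat) 1) as [|Hn]; auto. exfalso.
  set (e := Rabs (1 - al 0%nat)).
  assert (He0 : 0 < e) by (apply Rabs_pos_lt; intro; apply Hn; lra).
  destruct (He 1 0%nat (e/2) ltac:(lra)) as [X0 HX].
  set (x := Rmax (X0 + 1) (4/e + 2)).
  assert (Hx1 : X0 < x) by (unfold x; pose proof (Rmax_l (X0+1) (4/e+2)); lra).
  assert (Hx2 : 4/e + 2 <= x) by (unfold x; apply Rmax_r).
  assert (0 < 4/e) by (apply Rdiv_lt_0_compat; lra).
  specialize (HX x Hx1).
  assert (Ex : xpow x 0 = x) by (unfold xpow; simpl; field).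
  simpl sum_f_R0 in HX. rewrite Ex in HX. simpl in HX. rewrite Rmult_1_r in HX.
  destruct (Hm (x-1) (x+1)) as [_ [H1 H2]]; try lra.
  rewrite Rmin_left in H1 by lra. rewrite Rmax_right in H2 by lra.
  rewrite (Rabs_right x) in HX by lra.
  assert (Hxe : e * x >= 4 + 2*e) by (apply Rle_ge; replace (4 + 2*e) with (e * (4/e + 2)) by (field; lra); apply Rmult_le_compat_l; lra).
  unfold e in *. unfold Rabs in *.
  destruct (Rcase_abs (1 - al 0%nat)); destruct (Rcase_abs (X (x - 1) (x + 1) - al 0%nat * x)); nra.
Qed.

Lemma Psum0 al n : Psum al n 0 = al 0%nat.
Proof.
  induction n. unfold Psum; simpl; ring.
  unfold Psum in *. rewrite tech5, IHn. replace (2 * S n)%nat with (S (2*n+1)) by lia. simpl. ring.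
Qed.

Lemma pow2_sq tt w i : tt * tt = 1 -> (tt * w)^(2*i) = w^(2*i).
Proof. intros H. rewrite Rpow_mult_distr, pow_mult. simpl. rewrite Rmult_1_r, H, pow1. ring. Qed.

Lemma expansion_key X al n eps tt w : homogeneous_mean X -> tt * tt = 1 -> 0 < w -> w < 1 ->
  Rabs (X (/w - tt) (/w + tt) - sum_f_R0 (fun n0 => al n0 * tt ^ (2 * n0) * xpow (/w) n0) n)
            <= eps * Rabs (xpow (/w) n) ->
  Rabs (GX X (tt*w) - Psum al n (tt*w)) <= eps * w ^ (2 * n).
Proof.
  intros Hh Htt Hw Hw1 H.
  assert (Ht : tt = 1 \/ tt = -1) by (destruct (Rle_dec 0 tt); [left|right]; nra).
  assert (E1 : X (/w - tt) (/w + tt) = /w * GX X (tt*w)).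
  { unfold GX. rewrite <- Hh. f_equal; field; lra. apply Rinv_0_lt_compat; auto.
    destruct Ht; subst; lra. destruct Ht; subst; lra. }
  assert (E2 : forall i, xpow (/w) i = /w * w^(2*i)).
  { intros i. unfold xpow. rewrite pow_inv. field. split; [lra|]. apply pow_nonzero; lra. }
  assert (E3 : forall m, sum_f_R0 (fun n0 => al n0 * tt ^ (2 * n0) * xpow (/w) n0) m = /w * Psum al m (tt*w)).
  { intros m. unfold Psum. induction m.
    - simpl. rewrite E2. simpl. field. lra.
    - rewrite !tech5, IHm, E2, pow2_sq by auto. rewrite pow_mult. simpl. rewrite Rmult_1_r, Htt, pow1. ring. }
  rewrite E1, E3, E2 in H. rewrite <- Rmult_minus_distr_l, Rabs_mult in H.
  rewrite (Rabs_right (/w)) in H by (apply Rle_ge, Rlt_le, Rinv_0_lt_compat; auto).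
  rewrite Rabs_mult in H. rewrite (Rabs_right (/w)) in H by (apply Rle_ge, Rlt_le, Rinv_0_lt_compat; auto).
  rewrite (Rabs_right (w^(2*n))) in H by (apply Rle_ge, pow_le; lra).
  apply Rmult_le_reg_l with (/w). apply Rinv_0_lt_compat; auto. nra.
Qed.

Lemma expansion_Lv X al n : is_mean X -> homogeneous_mean X -> sym_asymp_expansion X al ->
  Lv (2*n) (fun v => GX X v - Psum al n v).
Proof.
  intros Hm Hh He eps Heps.
  pose proof (a0_is_1 X al Hm He) as H0.
  destruct (He 1 n eps Heps) as [X1 HX1]. destruct (He (-1) n eps Heps) as [X2 HX2].
  assert (HA : 0 < Rabs X1 + Rabs X2 + 1) by (pose proof (Rabs_pos X1); pose proof (Rabs_pos X2); lra).
  set (d := Rmin 1 (/ (Rabs X1 + Rabs X2 + 1))).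
  assert (Hd : 0 < d) by (apply Rmin_pos; [lra| apply Rinv_0_lt_compat; lra]).
  exists d. split; auto. intros v Hv.
  assert (Hv1 : Rabs v < 1) by (apply Rlt_le_trans with (1:=Hv); apply Rmin_l).
  assert (Hv2 : Rabs v < / (Rabs X1 + Rabs X2 + 1)) by (apply Rlt_le_trans with (1:=Hv); apply Rmin_r).
  destruct (Req_dec v 0) as [Hv0|Hv0].
  - subst v. rewrite GX0, Psum0, H0 by auto. rewrite Rminus_diag, Rabs_R0.
    apply Rmult_le_pos; [lra| apply pow_le; lra].
  - set (w := Rabs v). assert (Hw : 0 < w) by (apply Rabs_pos_lt; auto).
    assert (Hx : Rabs X1 + Rabs X2 + 1 < / w).
    { rewrite <- (Rinv_inv (Rabs X1 + Rabs X2 + 1)). apply Rinv_lt_contravar; auto.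
      apply Rmult_lt_0_compat; [auto| apply Rinv_0_lt_compat; lra]. }
    pose proof (Rle_abs X1). pose proof (Rle_abs X2). pose proof (Rabs_pos X1). pose proof (Rabs_pos X2).
    destruct (Rlt_dec 0 v).
    + assert (Ev : v = 1 * w) by (unfold w; rewrite Rabs_right; lra). rewrite Ev.
      apply expansion_key; auto; try lra. apply HX1. lra.
    + assert (Ev : v = -1 * w) by (unfold w; rewrite Rabs_left; lra). rewrite Ev.
      apply expansion_key; auto; try lra. apply HX2. lra.
Qed.


Lemma Lv_ext k F G : (forall v, F v = G v) -> Lv k F -> Lv k G.
Proof. intros E H eps He. destruct (H eps He) as [d [Hd F1]]. exists d; split; auto. intros v Hv. rewrite <- E. auto. Qed.

Lemma Lv_plus k f g : Lv k f -> Lv k g -> Lv k (fun u => f u + g u).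
Proof.
  intros Hf Hg eps He. destruct (Hf (eps/2)) as [d1 [H1 F1]]; [lra|].
  destruct (Hg (eps/2)) as [d2 [H2 F2]]; [lra|].
  exists (Rmin d1 d2). split. apply Rmin_pos; lra. intros u Hu.
  assert (Rabs u<d1) by (apply Rlt_le_trans with (1:=Hu); apply Rmin_l).
  assert (Rabs u<d2) by (apply Rlt_le_trans with (1:=Hu); apply Rmin_r).
  specialize (F1 u ltac:(lra)). specialize (F2 u ltac:(lra)).
  eapply Rle_trans. apply Rabs_triang. lra.
Qed.

Lemma Lv_opp k f : Lv k f -> Lv k (fun u => - f u).
Proof. intros H eps He. destruct (H eps He) as [d [Hd F1]]. exists d; split; auto. intros v Hv. rewrite Rabs_Ropp. auto. Qed.

Lemma Lv_minus k f g : Lv k f -> Lv k g -> Lv k (fun u => f u - g u).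
Proof. intros. apply Lv_plus; auto. apply Lv_opp; auto. Qed.

Lemma Lv_zero k : Lv k (fun _ => 0).
Proof. intros eps He. exists 1. split; [lra|]. intros u Hu. rewrite Rabs_R0. apply Rmult_le_pos. lra. apply pow_le, Rabs_pos. Qed.

Lemma Lv_Bv k f : Lv k f -> Bv k f.
Proof. intros H. destruct (H 1 ltac:(lra)) as [d [Hd F]]. exists 1, d. auto. Qed.

Lemma Bv_plus k f g : Bv k f -> Bv k g -> Bv k (fun u => f u + g u).
Proof.
  intros [C1 [d1 [H1 F1]]] [C2 [d2 [H2 F2]]]. exists (C1+C2), (Rmin d1 d2). split. apply Rmin_pos; lra. intros u Hu.
  assert (Rabs u<d1) by (apply Rlt_le_trans with (1:=Hu); apply Rmin_l).
  assert (Rabs u<d2) by (apply Rlt_le_trans with (1:=Hu); apply Rmin_r).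
  specialize (F1 u ltac:(lra)). specialize (F2 u ltac:(lra)).
  eapply Rle_trans. apply Rabs_triang. lra.
Qed.

Lemma Bv_mon k c : Bv k (fun v => c * v^k).
Proof. exists (Rabs c), 1. split; [lra|]. intros v _. rewrite Rabs_mult, <- RPow_abs. lra. Qed.

Lemma Psum1 al v : al 0%nat = 1 -> Psum al 1 v = 1 + al 1%nat * v^2.
Proof. intros H. unfold Psum. simpl. rewrite H. ring. Qed.

Lemma Psum2 al v : al 0%nat = 1 -> Psum al 2 v = 1 + al 1%nat * v^2 + al 2%nat * v^4.
Proof. intros H. unfold Psum. simpl. rewrite H. ring. Qed.

Lemma Bv_ext k F G : (forall v, F v = G v) -> Bv k F -> Bv k G.
Proof. intros E [C [d [Hd F1]]]. exists C, d; split; auto. intros v Hv. rewrite <- E. auto. Qed.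

Lemma GX_Bv2 X al : is_mean X -> homogeneous_mean X -> sym_asymp_expansion X al ->
  Bv 2 (fun v => GX X v - 1).
Proof.
  intros Hm Hh He. pose proof (a0_is_1 X al Hm He).
  apply Bv_ext with (fun v => (GX X v - Psum al 1 v) + al 1%nat * v^2).
  intros v. rewrite Psum1 by auto. ring.
  apply Bv_plus. apply Lv_Bv. exact (expansion_Lv X al 1 Hm Hh He). apply Bv_mon.
Qed.

Lemma Psum_diff al1 al2 n v : (forall i, (i < n)%nat -> al1 i = al2 i) ->
  Psum al1 n v - Psum al2 n v = (al1 n - al2 n) * v^(2*n).
Proof.
  intros H. unfold Psum. destruct n. simpl. ring.
  rewrite !tech5.
  assert (sum_f_R0 (fun i => al1 i * v ^ (2 * i)) n = sum_f_R0 (fun i => al2 i * v ^ (2 * i)) n).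
  { apply sum_eq. intros i Hi. rewrite H by lia. auto. }
  rewrite H0. ring.
Qed.

Lemma GX_diff_Lv X Y al1 al2 n :
  is_mean X -> homogeneous_mean X -> sym_asymp_expansion X al1 ->
  is_mean Y -> homogeneous_mean Y -> sym_asymp_expansion Y al2 ->
  (forall i, (i < n)%nat -> al1 i = al2 i) ->
  Lv (2*n) (fun v => GX X v - GX Y v - (al1 n - al2 n) * v^(2*n)).
Proof.
  intros. apply Lv_ext with (fun v => (GX X v - Psum al1 n v) - (GX Y v - Psum al2 n v)).
  intros v. pose proof (Psum_diff al1 al2 n v H5). lra.
  apply Lv_minus; apply expansion_Lv; auto.
Qed.

Lemma GX_arith_Lv X al : is_mean X -> homogeneous_mean X -> sym_asymp_expansion X al ->
  Lv 2 (fun v => GX X v - (fun _ => 1) v - al 1%nat * v^2).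
Proof.
  intros Hm Hh He. pose proof (a0_is_1 X al Hm He).
  apply Lv_ext with (fun v => GX X v - Psum al 1 v). intros v. rewrite Psum1 by auto. ring.
  exact (expansion_Lv X al 1 Hm Hh He).
Qed.

Definition Near (alpha : R) (f : R -> R) : Prop := BO 2 (fun u => f u - (1 + alpha * u)).

Lemma Near_BO1 alpha f : Near alpha f -> BO 1 (fun u => f u - 1).
Proof.
  intros H. apply BO_ext with (fun u => (f u - (1 + alpha*u)) + alpha * u). exists 1; split; [lra|intros; ring].
  apply BO_plus. apply BO_mono with 2%nat; auto. apply BO_scal, BO_id.
Qed.

Lemma Near_mu alpha beta a b : Near alpha a -> Near beta b ->
  BO 2 (fun u => (b u - a u)/(a u + b u) - ((beta - alpha)/2) * u).
Proof.
  intros Ha Hb.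
  assert (Hs : BO 1 (fun u => (a u + b u) - 2)).
  { apply BO_ext with (fun u => (a u - 1) + (b u - 1)). exists 1; split; [lra|intros; ring].
    apply BO_plus; eapply Near_BO1; eauto. }
  destruct (BO1_away _ 2 ltac:(lra) Hs) as [e [He E]].
  apply BO_ext with (fun u => ((b u - (1 + beta*u)) - (a u - (1 + alpha*u)) - ((beta - alpha)/2) * (u * ((a u + b u) - 2))) / (a u + b u)).
  exists e; split; auto. intros u Hu. specialize (E u Hu). field. lra.
  apply BO_div with 2. lra. auto.
  apply BO_minus. apply BO_minus; auto. apply BO_scal. change 2%nat with (1+1)%nat. apply BO_mul; auto. apply BO_id.
Qed.

Lemma Near_Mn G alpha beta a b : Bv 2 (fun v => G v - 1) -> Near alpha a -> Near beta b ->
  Near ((alpha + beta)/2) (fun u => Mn G (a u) (b u)).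
Proof.
  intros HG Ha Hb. unfold Near, Mn.
  pose proof (Near_mu _ _ _ _ Ha Hb) as Hm.
  assert (Hv : BO 1 (fun u => (b u - a u)/(a u + b u))).
  { apply BO_ext with (fun u => ((b u - a u)/(a u + b u) - ((beta - alpha)/2) * u) + ((beta - alpha)/2) * u).
    exists 1; split; [lra|intros; ring]. apply BO_plus. apply BO_mono with 2%nat; auto. apply BO_scal, BO_id. }
  apply BO_ext with (fun u => (a u + b u)/2 * (G ((b u - a u)/(a u + b u)) - 1)
                               + /2 * ((a u - (1 + alpha*u)) + (b u - (1 + beta * u)))).
  exists 1; split; [lra|intros; field].
  apply BO_plus.
  - change 2%nat with (0+2)%nat. apply BO_mul.
    apply BO_sub_lin with 1. apply BO_ext with (fun u => /2 * ((a u - 1) + (b u - 1))). exists 1; split; [lra|intros; field].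
    apply BO_scal. apply BO_plus; eapply Near_BO1; eauto.
    apply (Bv_comp 2 (fun v => G v - 1) (fun u => (b u - a u)/(a u + b u))); auto.
  - apply BO_scal, BO_plus; auto.
Qed.

Lemma Near_s : Near (-1) (fun u => 1 - u).
Proof. unfold Near. apply BO_ext with (fun _ => 0). exists 1; split; [lra|intros; ring]. apply BO_zero. Qed.
Lemma Near_t : Near 1 (fun u => 1 + u).
Proof. unfold Near. apply BO_ext with (fun _ => 0). exists 1; split; [lra|intros; ring]. apply BO_zero. Qed.

Lemma Near_ext alpha f g : (exists d0, 0<d0 /\ forall u, 0<u<d0 -> f u = g u) -> Near alpha f -> Near alpha g.
Proof. intros [d0 [Hd E]] H. unfold Near in *. apply BO_ext with (fun u => f u - (1 + alpha * u)); auto.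
  exists d0; split; auto. intros. rewrite E; auto. Qed.




Lemma core_near (G1 G2 : R->R) (al:nat->R) (n:nat) (c da db alpha beta : R) (a1 b1 a2 b2 : R -> R) :
  (1 <= n)%nat ->
  Lv (2*n) (fun v => G1 v - Psum al n v) ->
  Bv 2 (fun v => G1 v - 1) ->
  Lv (2*n) (fun v => G1 v - G2 v - c * v^(2*n)) ->
  Lo (2*n) (fun u => a1 u - a2 u - da * u^(2*n)) ->
  Lo (2*n) (fun u => b1 u - b2 u - db * u^(2*n)) ->
  Near alpha a2 -> Near beta b2 ->
  Lo (2*n) (fun u => Mn G1 (a1 u) (b1 u) - Mn G2 (a2 u) (b2 u)
                     - ((da+db)/2 + c * ((beta - alpha)/2)^(2*n)) * u^(2*n)).
Proof.
  intros. apply core with al; auto. eapply Near_BO1; eauto. eapply Near_BO1; eauto.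
  apply Near_mu; auto.
Qed.

Definition cA (G : R -> R) (u : R) := Mn G (1-u) (1+u).
Definition cP (G : R -> R) (u : R) := Mn G (1-u) (cA G u).
Definition cQ (G : R -> R) (u : R) := Mn G (cA G u) (1+u).
Definition cO (G : R -> R) (u : R) := Mn G (cP G u) (cQ G u).

Lemma stable_Mn X : is_mean X -> homogeneous_mean X -> stable_mean X ->
  forall u, 0 < u < 1 -> cA (GX X) u = cO (GX X) u.
Proof.
  intros Hm Hh Hs u Hu.
  assert (H1 : 0 < 1 - u) by lra. assert (H2 : 0 < 1 + u) by lra.
  pose proof (mean_pos X _ _ Hm H1 H2) as Hm0.
  pose proof (mean_pos X _ _ Hm H1 Hm0) as Hp.
  pose proof (mean_pos X _ _ Hm Hm0 H2) as Hq.
  pose proof (Hs _ _ H1 H2) as E.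
  unfold cO, cP, cQ, cA.
  assert (Em : X (1-u) (1+u) = Mn (GX X) (1-u) (1+u)) by (apply repr; auto).
  assert (Ep : X (1-u) (X (1-u) (1+u)) = Mn (GX X) (1-u) (Mn (GX X) (1-u) (1+u))) by (rewrite repr by auto; rewrite Em; auto).
  assert (Eq : X (X (1-u) (1+u)) (1+u) = Mn (GX X) (Mn (GX X) (1-u) (1+u)) (1+u)) by (rewrite repr by auto; rewrite Em; auto).
  rewrite <- Ep, <- Eq, <- Em. rewrite <- repr by auto. exact E.
Qed.

Lemma Near_config G : Bv 2 (fun v => G v - 1) ->
  Near ((-1 + 1)/2) (cA G) /\ Near ((-1 + (-1+1)/2)/2) (cP G) /\ Near (((-1+1)/2 + 1)/2) (cQ G).
Proof.
  intros HG. pose proof (Near_Mn G _ _ _ _ HG Near_s Near_t) as HA.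
  split; auto. split.
  apply (Near_Mn G _ _ (fun u => 1 - u) (cA G) HG Near_s HA).
  apply (Near_Mn G _ _ (cA G) (fun u => 1 + u) HG HA Near_t).
Qed.

Lemma Lo_s k : Lo k (fun u => (1 - u) - (1 - u) - 0 * u^k).
Proof. apply Lo_ext with (fun _ => 0). exists 1; split; [lra|intros; ring]. apply Lo_zero. Qed.
Lemma Lo_t k : Lo k (fun u => (1 + u) - (1 + u) - 0 * u^k).
Proof. apply Lo_ext with (fun _ => 0). exists 1; split; [lra|intros; ring]. apply Lo_zero. Qed.

Lemma middle (G1 G2 : R -> R) al n c : (1 <= n)%nat ->
  Lv (2*n) (fun v => G1 v - Psum al n v) -> Bv 2 (fun v => G1 v - 1) ->
  Lv (2*n) (fun v => G1 v - G2 v - c * v^(2*n)) ->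
  Lo (2*n) (fun u => cA G1 u - cA G2 u - ((0+0)/2 + c * ((1 - -1)/2)^(2*n)) * u^(2*n)).
Proof.
  intros. unfold cA. apply (core_near G1 G2 al n c 0 0 (-1) 1 (fun u => 1-u) (fun u => 1+u) (fun u => 1-u) (fun u => 1+u)); auto.
  apply Lo_s. apply Lo_t. apply Near_s. apply Near_t.
Qed.

Lemma chain (Gi1 Gi2 Go1 Go2 : R -> R) (ai ao : nat -> R) n ci co cm alpha0 (m1 m2 : R -> R) :
  (1 <= n)%nat ->
  Lv (2*n) (fun v => Gi1 v - Psum ai n v) -> Bv 2 (fun v => Gi1 v - 1) ->
  Lv (2*n) (fun v => Go1 v - Psum ao n v) -> Bv 2 (fun v => Go1 v - 1) ->
  Bv 2 (fun v => Gi2 v - 1) -> Bv 2 (fun v => Go2 v - 1) ->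
  Lv (2*n) (fun v => Gi1 v - Gi2 v - ci * v^(2*n)) ->
  Lv (2*n) (fun v => Go1 v - Go2 v - co * v^(2*n)) ->
  Lo (2*n) (fun u => m1 u - m2 u - cm * u^(2*n)) -> Near alpha0 m2 ->
  Lo (2*n) (fun u => Mn Go1 (Mn Gi1 (1-u) (m1 u)) (Mn Gi1 (m1 u) (1+u))
                   - Mn Go2 (Mn Gi2 (1-u) (m2 u)) (Mn Gi2 (m2 u) (1+u))
    - ((((0 + cm)/2 + ci * ((alpha0 - -1)/2)^(2*n)) + ((cm + 0)/2 + ci * ((1 - alpha0)/2)^(2*n)))/2
       + co * (((alpha0 + 1)/2 - (-1 + alpha0)/2)/2)^(2*n)) * u^(2*n)).
Proof.
  intros Hn Hi1 Bi1 Ho1 Bo1 Bi2 Bo2 Di Do Dm Nm.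
  pose proof (Near_Mn Gi2 _ _ (fun u => 1-u) m2 Bi2 Near_s Nm) as Np.
  pose proof (Near_Mn Gi2 _ _ m2 (fun u => 1+u) Bi2 Nm Near_t) as Nq.
  apply (core_near Go1 Go2 ao n co _ _ _ _ (fun u => Mn Gi1 (1-u) (m1 u)) (fun u => Mn Gi1 (m1 u) (1+u))
      (fun u => Mn Gi2 (1-u) (m2 u)) (fun u => Mn Gi2 (m2 u) (1+u))); auto.
  - apply (core_near Gi1 Gi2 ai n ci 0 cm (-1) alpha0 (fun u => 1-u) m1 (fun u => 1-u) m2); auto.
    apply Lo_s. apply Near_s.
  - apply (core_near Gi1 Gi2 ai n ci cm 0 alpha0 1 m1 (fun u => 1+u) m2 (fun u => 1+u)); auto.
    apply Lo_t. apply Near_t.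
Qed.

Lemma Lo_combine n f g k1 k2 :
  Lo n (fun u => f u - k1 * u^n) -> Lo n (fun u => g u - k2 * u^n) ->
  (exists d0, 0 < d0 /\ forall u, 0<u<d0 -> f u = g u) -> k1 = k2.
Proof.
  intros H1 H2 [d0 [Hd E]].
  assert (k2 - k1 = 0). apply (Lo_coef n).
  apply Lo_ext with (fun u => (f u - k1 * u^n) - (g u - k2 * u^n)).
  exists d0; split; auto. intros u Hu. rewrite E by auto. ring.
  apply Lo_minus; auto. lra.
Qed.

Lemma half_pow_small n : (2 <= n)%nat -> (1/2)^(2*n) <= 1/16.
Proof.
  intros H. replace (2*n)%nat with (4 + (2*n-4))%nat by lia. rewrite pow_add.
  assert ((1/2)^(2*n-4) <= 1) by (apply pow_le1; lra).
  assert (0 <= (1/2)^(2*n-4)) by (apply pow_le; lra).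
  assert (E : (1/2)^4 = 1/16) by (simpl; field). rewrite E. nra.
Qed.

Lemma unique_step K N aK aN n : (2 <= n)%nat ->
  is_mean K -> homogeneous_mean K -> stable_mean K -> sym_asymp_expansion K aK ->
  is_mean N -> homogeneous_mean N -> stable_mean N -> sym_asymp_expansion N aN ->
  (forall i, (i < n)%nat -> aK i = aN i) -> aK n = aN n.
Proof.
  intros Hn HmK HhK HsK HeK HmN HhN HsN HeN Hlow.
  assert (Hn1 : (1 <= n)%nat) by lia.
  pose proof (expansion_Lv K aK n HmK HhK HeK) as EK.
  pose proof (GX_Bv2 K aK HmK HhK HeK) as BK.
  pose proof (GX_Bv2 N aN HmN HhN HeN) as BN.
  pose proof (GX_diff_Lv K N aK aN n HmK HhK HeK HmN HhN HeN Hlow) as D.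
  set (c := aK n - aN n) in *.
  pose proof (middle _ _ _ _ _ Hn1 EK BK D) as S1.
  destruct (Near_config _ BN) as [NA _].
  pose proof (chain _ _ _ _ aK aK n c c _ _ (cA (GX K)) (cA (GX N)) Hn1 EK BK EK BK BN BN D D S1 NA) as S4.
  assert (Heq : ((0+0)/2 + c * ((1 - -1)/2)^(2*n)) =
    ((((0 + ((0+0)/2 + c * ((1 - -1)/2)^(2*n)))/2 + c * (((-1+1)/2 - -1)/2)^(2*n))
      + ((((0+0)/2 + c * ((1 - -1)/2)^(2*n)) + 0)/2 + c * ((1 - (-1+1)/2)/2)^(2*n)))/2
       + c * ((((-1+1)/2 + 1)/2 - (-1 + (-1+1)/2)/2)/2)^(2*n))).
  { apply (Lo_combine _ _ _ _ _ S1 S4). exists 1; split; [lra|]. intros u Hu.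
    rewrite (stable_Mn K HmK HhK HsK u Hu) at 1. rewrite (stable_Mn N HmN HhN HsN u Hu) at 1. unfold cO, cP, cQ. reflexivity. }
  replace ((1 - -1)/2) with 1 in Heq by field.
  replace (((-1+1)/2 - -1)/2) with (1/2) in Heq by field.
  replace ((1 - (-1+1)/2)/2) with (1/2) in Heq by field.
  replace ((((-1+1)/2 + 1)/2 - (-1 + (-1+1)/2)/2)/2) with (1/2) in Heq by field.
  rewrite pow1 in Heq. pose proof (half_pow_small n Hn).
  assert (0 <= (1/2)^(2*n)) by (apply pow_le; lra).
  assert (c * (1/2 - 2 * (1/2)^(2*n)) = 0) by lra.
  apply Rmult_integral in H1. destruct H1. unfold c in H1; lra. lra.
Qed.

Lemma unique_all K N aK aN :
  is_mean K -> homogeneous_mean K -> stable_mean K -> sym_asymp_expansion K aK ->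
  is_mean N -> homogeneous_mean N -> stable_mean N -> sym_asymp_expansion N aN ->
  aK 1%nat = aN 1%nat -> forall n, aK n = aN n.
Proof.
  intros HmK HhK HsK HeK HmN HhN HsN HeN H1 n.
  induction n as [n IH] using (well_founded_induction Wf_nat.lt_wf).
  destruct n as [|[|n]].
  - rewrite (a0_is_1 K aK), (a0_is_1 N aN); auto.
  - auto.
  - apply (unique_step K N aK aN); auto. lia.
Qed.


Lemma stabilized_Mn K N M : is_mean K -> homogeneous_mean K -> is_mean N -> homogeneous_mean N ->
  is_mean M -> homogeneous_mean M -> stabilized K N M ->
  forall u, 0 < u < 1 -> cA (GX M) u = Mn (GX K) (Mn (GX N) (1-u) (cA (GX M) u)) (Mn (GX N) (cA (GX M) u) (1+u)).
Proof.
  intros HmK HhK HmN HhN HmM HhM Hs u Hu.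
  assert (H1 : 0 < 1 - u) by lra. assert (H2 : 0 < 1 + u) by lra.
  pose proof (mean_pos M _ _ HmM H1 H2) as Hm0.
  pose proof (mean_pos N _ _ HmN H1 Hm0) as Hp.
  pose proof (mean_pos N _ _ HmN Hm0 H2) as Hq.
  pose proof (Hs _ _ H1 H2) as E. unfold cA.
  assert (Em : M (1-u) (1+u) = Mn (GX M) (1-u) (1+u)) by (apply repr; auto).
  assert (Ep : N (1-u) (M (1-u) (1+u)) = Mn (GX N) (1-u) (Mn (GX M) (1-u) (1+u))) by (rewrite repr by auto; rewrite Em; auto).
  assert (Eq : N (M (1-u) (1+u)) (1+u) = Mn (GX N) (Mn (GX M) (1-u) (1+u)) (1+u)) by (rewrite repr by auto; rewrite Em; auto).
  rewrite <- Ep, <- Eq, <- Em. rewrite <- repr by auto. exact E.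
Qed.

Lemma stabilizable_Mn K N M : is_mean K -> homogeneous_mean K -> is_mean N -> homogeneous_mean N ->
  is_mean M -> homogeneous_mean M -> stabilizable K N M ->
  forall u, 0 < u < 1 -> cA (GX M) u = Mn (GX K) (Mn (GX M) (1-u) (cA (GX N) u)) (Mn (GX M) (cA (GX N) u) (1+u)).
Proof.
  intros HmK HhK HmN HhN HmM HhM Hs u Hu.
  assert (H1 : 0 < 1 - u) by lra. assert (H2 : 0 < 1 + u) by lra.
  pose proof (mean_pos N _ _ HmN H1 H2) as Hm0.
  pose proof (mean_pos M _ _ HmM H1 Hm0) as Hp.
  pose proof (mean_pos M _ _ HmM Hm0 H2) as Hq.
  pose proof (Hs _ _ H1 H2) as E. unfold cA.
  assert (Em : N (1-u) (1+u) = Mn (GX N) (1-u) (1+u)) by (apply repr; auto).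
  assert (Ep : M (1-u) (N (1-u) (1+u)) = Mn (GX M) (1-u) (Mn (GX N) (1-u) (1+u))) by (rewrite repr by auto; rewrite Em; auto).
  assert (Eq : M (N (1-u) (1+u)) (1+u) = Mn (GX M) (Mn (GX N) (1-u) (1+u)) (1+u)) by (rewrite repr by auto; rewrite Em; auto).
  rewrite <- Ep, <- Eq. rewrite <- repr by auto. rewrite <- repr by auto. exact E.
Qed.

Lemma M_same_K K N M aK aN aM :
  is_mean K -> homogeneous_mean K -> stable_mean K -> sym_asymp_expansion K aK ->
  is_mean N -> homogeneous_mean N -> sym_asymp_expansion N aN ->
  is_mean M -> homogeneous_mean M -> sym_asymp_expansion M aM ->
  stabilized K N M -> (forall n, aK n = aN n) -> forall n, aM n = aK n.
Proof.
  intros HmK HhK HsK HeK HmN HhN HeN HmM HhM HeM Hst HKN n.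
  induction n as [n IH] using (well_founded_induction Wf_nat.lt_wf).
  destruct n as [|n].
  - rewrite (a0_is_1 K aK), (a0_is_1 M aM); auto.
  - set (m := S n). assert (Hn1 : (1 <= m)%nat) by (unfold m; lia).
    pose proof (expansion_Lv K aK m HmK HhK HeK) as EK.
    pose proof (expansion_Lv N aN m HmN HhN HeN) as EN.
    pose proof (expansion_Lv M aM m HmM HhM HeM) as EM.
    pose proof (GX_Bv2 K aK HmK HhK HeK) as BK.
    pose proof (GX_Bv2 N aN HmN HhN HeN) as BN.
    pose proof (GX_Bv2 M aM HmM HhM HeM) as BM.
    pose proof (GX_diff_Lv M K aM aK m HmM HhM HeM HmK HhK HeK (fun i Hi => IH i Hi)) as DMK.
    pose proof (GX_diff_Lv N K aN aK m HmN HhN HeN HmK HhK HeK (fun i Hi => eq_sym (HKN i))) as DNK.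
    pose proof (GX_diff_Lv K K aK aK m HmK HhK HeK HmK HhK HeK (fun i Hi => eq_refl)) as DKK.
    set (c := aM m - aK m) in *.
    pose proof (middle _ _ _ _ _ Hn1 EM BM DMK) as S1.
    destruct (Near_config _ BK) as [NA _].
    pose proof (chain _ _ _ _ aN aK m _ _ _ _ (cA (GX M)) (cA (GX K)) Hn1 EN BN EK BK BK BK DNK DKK S1 NA) as S4.
    match type of S1 with Lo _ (fun u => _ - ?k * _) => set (k1 := k) in S1 end.
    match type of S4 with Lo _ (fun u => _ - ?k * _) => set (k2 := k) in S4 end.
    assert (Heq : k1 = k2).
    { apply (Lo_combine _ _ _ _ _ S1 S4). exists 1; split; [lra|]. intros u Hu.
      rewrite (stabilized_Mn K N M HmK HhK HmN HhN HmM HhM Hst u Hu) at 1.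
      rewrite (stable_Mn K HmK HhK HsK u Hu) at 1. unfold cO, cP, cQ. reflexivity. }
    unfold k1, k2 in Heq. rewrite HKN in Heq. rewrite !Rminus_diag in Heq.
    replace ((1 - -1)/2) with 1 in Heq by field. rewrite pow1 in Heq. unfold c in Heq. lra.
Qed.

Lemma a1_facts K N M aK aN aM :
  is_mean K -> homogeneous_mean K -> sym_asymp_expansion K aK ->
  is_mean N -> homogeneous_mean N -> sym_asymp_expansion N aN ->
  is_mean M -> homogeneous_mean M -> sym_asymp_expansion M aM ->
  stabilizable K N M -> stabilized K N M -> aK 1%nat = aM 1%nat /\ aN 1%nat = aM 1%nat.
Proof.
  intros HmK HhK HeK HmN HhN HeN HmM HhM HeM Hsz Hsd.
  set (G1 := fun _ : R => 1).
  assert (B1 : Bv 2 (fun v => G1 v - 1)).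
  { apply Bv_ext with (fun v => 0 * v^2). intros; unfold G1; ring. apply Bv_mon. }
  assert (Hn1 : (1 <= 1)%nat) by lia.
  pose proof (expansion_Lv K aK 1 HmK HhK HeK) as EK.
  pose proof (expansion_Lv N aN 1 HmN HhN HeN) as EN.
  pose proof (expansion_Lv M aM 1 HmM HhM HeM) as EM.
  pose proof (GX_Bv2 K aK HmK HhK HeK) as BK.
  pose proof (GX_Bv2 N aN HmN HhN HeN) as BN.
  pose proof (GX_Bv2 M aM HmM HhM HeM) as BM.
  pose proof (GX_arith_Lv K aK HmK HhK HeK) as DK.
  pose proof (GX_arith_Lv N aN HmN HhN HeN) as DN.
  pose proof (GX_arith_Lv M aM HmM HhM HeM) as DM.
  change (fun v => GX K v - (fun _ => 1) v - aK 1%nat * v^2) with (fun v => GX K v - G1 v - aK 1%nat * v^(2*1)) in DK.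
  change (fun v => GX N v - (fun _ => 1) v - aN 1%nat * v^2) with (fun v => GX N v - G1 v - aN 1%nat * v^(2*1)) in DN.
  change (fun v => GX M v - (fun _ => 1) v - aM 1%nat * v^2) with (fun v => GX M v - G1 v - aM 1%nat * v^(2*1)) in DM.
  destruct (Near_config _ B1) as [NA _].
  assert (ID : forall u, cA G1 u = Mn G1 (Mn G1 (1-u) (cA G1 u)) (Mn G1 (cA G1 u) (1+u))).
  { intros u. unfold cA, Mn, G1. field. }
  pose proof (middle _ _ _ _ _ Hn1 EM BM DM) as SM.
  pose proof (middle _ _ _ _ _ Hn1 EN BN DN) as SN.
  pose proof (chain _ _ _ _ aM aK 1 _ _ _ _ (cA (GX N)) (cA G1) Hn1 EM BM EK BK B1 B1 DM DK SN NA) as S4.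
  match type of SM with Lo _ (fun u => _ - ?k * _) => set (k1 := k) in SM end.
  match type of S4 with Lo _ (fun u => _ - ?k * _) => set (k2 := k) in S4 end.
  assert (Heq1 : k1 = k2).
  { apply (Lo_combine _ _ _ _ _ SM S4). exists 1; split; [lra|]. intros u Hu.
    rewrite (stabilizable_Mn K N M HmK HhK HmN HhN HmM HhM Hsz u Hu) at 1.
    rewrite (ID u) at 1. reflexivity. }
  pose proof (chain _ _ _ _ aN aK 1 _ _ _ _ (cA (GX M)) (cA G1) Hn1 EN BN EK BK B1 B1 DN DK SM NA) as S5.
  match type of S5 with Lo _ (fun u => _ - ?k * _) => set (k3 := k) in S5 end.
  assert (Heq2 : k1 = k3).
  { apply (Lo_combine _ _ _ _ _ SM S5). exists 1; split; [lra|]. intros u Hu.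
    rewrite (stabilized_Mn K N M HmK HhK HmN HhN HmM HhM Hsd u Hu) at 1.
    rewrite (ID u) at 1. reflexivity. }
  unfold k3, k2 in *. unfold k1 in *. simpl in Heq1, Heq2. field_simplify in Heq1. field_simplify in Heq2. split; lra.
Qed.


Definition PKf (k1 k2 v : R) : R := 1 + k1*v^2 + k2*v^4.
Definition Tp (k1 k2 u : R) : R := ((((((1)) + ((-1/2)) * u^1) + ((3/4)*k1) * u^2) + ((1/8)*k1 + (1/2)*k1*k1) * u^3) + ((9/16)*k2 + (1/16)*k1 + (1/8)*k1*k1 + (1/4)*k1*k1*k1) * u^4).
Definition Tq (k1 k2 u : R) : R := ((((((1)) + ((1/2)) * u^1) + ((3/4)*k1) * u^2) + ((-1/8)*k1 + (-1/2)*k1*k1) * u^3) + ((9/16)*k2 + (1/16)*k1 + (1/8)*k1*k1 + (1/4)*k1*k1*k1) * u^4).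
Definition Tout (k1 k2 u : R) : R := ((((1)) + ((1)*k1) * u^2) + ((5/8)*k2 + (1/16)*k1 + (-3/16)*k1*k1 + (-1/4)*k1*k1*k1) * u^4).
Definition R1 (k1 k2 u : R) : R := (((((((((((((3/2)*k2 + (1/2)*k1 + (12)*k1*k2 + (-2)*k1*k1*k1) + ((-3/4)*k2 + (-1/2)*k1 + (-23/2)*k1*k2 + (-1/2)*k1*k1 + (14)*k1*k1*k2 + (1)*k1*k1*k1 + (-2)*k1*k1*k1*k1) * u^1) + ((1/8)*k2 + (4)*k2*k2 + (1/8)*k1 + (9/2)*k1*k2 + (1)*k1*k1 + (-4)*k1*k1*k2 + (1/2)*k1*k1*k1 + (4)*k1*k1*k1*k2) * u^2) + ((-3/2)*k2*k2 + (-3/8)*k1*k2 + (16)*k1*k2*k2 + (-3/8)*k1*k1 + (-7/4)*k1*k1*k2 + (-3/4)*k1*k1*k1 + (6)*k1*k1*k1*k2 + (-1/2)*k1*k1*k1*k1 + (1)*k1*k1*k1*k1*k2 + (-2)*k1*k1*k1*k1*k1) * u^3) + ((3/2)*k2*k2 + (3/4)*k1*k2 + (4)*k1*k2*k2 + (3/8)*k1*k1*k2 + (12)*k1*k1*k2*k2 + (3/8)*k1*k1*k1 + (-6)*k1*k1*k1*k2 + (1/2)*k1*k1*k1*k1 + (1/2)*k1*k1*k1*k1*k1) * u^4) + ((-3/8)*k2*k2 + (6)*k2*k2*k2 + (-3/8)*k1*k2 + (-13/2)*k1*k2*k2 + (-3/4)*k1*k1*k2 + (12)*k1*k1*k2*k2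 + (-1/8)*k1*k1*k1*k2 + (4)*k1*k1*k1*k2*k2 + (-1/8)*k1*k1*k1*k1 + (-2)*k1*k1*k1*k1*k2 + (-1/4)*k1*k1*k1*k1*k1 + (-1/2)*k1*k1*k1*k1*k1*k1) * u^5) + ((3/4)*k1*k2*k2 + (12)*k1*k2*k2*k2 + (3/4)*k1*k1*k2 + (-6)*k1*k1*k2*k2 + (3/4)*k1*k1*k1*k2) * u^6) + ((-3/4)*k2*k2*k2 + (4)*k1*k2*k2*k2 + (-3/8)*k1*k1*k2*k2 + (6)*k1*k1*k2*k2*k2 + (-3/8)*k1*k1*k1*k2 + (3)*k1*k1*k1*k2*k2 + (-3/4)*k1*k1*k1*k1*k2 + (-3/2)*k1*k1*k1*k1*k1*k2) * u^7) + ((3/8)*k2*k2*k2 + (4)*k2*k2*k2*k2 + (3/8)*k1*k2*k2 + (-3/2)*k1*k1*k1*k2*k2) * u^8) + ((-7/8)*k1*k2*k2*k2 + (4)*k1*k2*k2*k2*k2 + (-3/8)*k1*k1*k2*k2 + (4)*k1*k1*k2*k2*k2 + (-3/4)*k1*k1*k1*k2*k2 + (-3/2)*k1*k1*k1*k1*k2*k2) * u^9) + ((-1/4)*k1*k2*k2*k2 + (-1)*k1*k1*k2*k2*k2) * u^10) + ((-1/8)*k2*k2*k2*k2 + (1)*k2*k2*k2*k2*k2 + (-1/8)*k1*k2*k2*k2 + (1)*k1*k2*k2*k2*k2 + (-1/4)*k1*k1*k2*k2*k2 + (-1/2)*k1*k1*k1*k2*k2*k2) * u^11).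
Definition W1 (k1 k2 u : R) : R := ((((((((((((-24)) + ((12) + (24)*k1) * u^1) + ((-2) + (-24)*k1) * u^2) + ((24)*k2 + (6)*k1 + (12)*k1*k1) * u^3) + ((-24)*k2 + (-6)*k1*k1) * u^4) + ((6)*k2 + (24)*k1*k2 + (2)*k1*k1*k1) * u^5) + ((-12)*k1*k2) * u^6) + ((12)*k2*k2 + (6)*k1*k1*k2) * u^7) + ((-6)*k2*k2) * u^8) + ((6)*k1*k2*k2) * u^9) + ((2)*k2*k2*k2) * u^11).
Definition R2 (k1 k2 u : R) : R := (((((((((((((-3/2)*k2 + (-1/2)*k1 + (-12)*k1*k2 + (2)*k1*k1*k1) + ((-3/4)*k2 + (-1/2)*k1 + (-23/2)*k1*k2 + (-1/2)*k1*k1 + (14)*k1*k1*k2 + (1)*k1*k1*k1 + (-2)*k1*k1*k1*k1) * u^1) + ((-1/8)*k2 + (-4)*k2*k2 + (-1/8)*k1 + (-9/2)*k1*k2 + (-1)*k1*k1 + (4)*k1*k1*k2 + (-1/2)*k1*k1*k1 + (-4)*k1*k1*k1*k2) * u^2) + ((-3/2)*k2*k2 + (-3/8)*k1*k2 + (16)*k1*k2*k2 + (-3/8)*k1*k1 + (-7/4)*k1*k1*k2 + (-3/4)*k1*k1*k1 + (6)*k1*k1*k1*k2 + (-1/2)*k1*k1*k1*k1 + (1)*k1*k1*k1*k1*k2 + (-2)*k1*k1*k1*k1*k1) * u^3) + ((-3/2)*k2*k2 + (-3/4)*k1*k2 + (-4)*k1*k2*k2 + (-3/8)*k1*k1*k2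 + (-12)*k1*k1*k2*k2 + (-3/8)*k1*k1*k1 + (6)*k1*k1*k1*k2 + (-1/2)*k1*k1*k1*k1 + (-1/2)*k1*k1*k1*k1*k1) * u^4) + ((-3/8)*k2*k2 + (6)*k2*k2*k2 + (-3/8)*k1*k2 + (-13/2)*k1*k2*k2 + (-3/4)*k1*k1*k2 + (12)*k1*k1*k2*k2 + (-1/8)*k1*k1*k1*k2 + (4)*k1*k1*k1*k2*k2 + (-1/8)*k1*k1*k1*k1 + (-2)*k1*k1*k1*k1*k2 + (-1/4)*k1*k1*k1*k1*k1 + (-1/2)*k1*k1*k1*k1*k1*k1) * u^5) + ((-3/4)*k1*k2*k2 + (-12)*k1*k2*k2*k2 + (-3/4)*k1*k1*k2 + (6)*k1*k1*k2*k2 + (-3/4)*k1*k1*k1*k2) * u^6) + ((-3/4)*k2*k2*k2 + (4)*k1*k2*k2*k2 + (-3/8)*k1*k1*k2*k2 + (6)*k1*k1*k2*k2*k2 + (-3/8)*k1*k1*k1*k2 + (3)*k1*k1*k1*k2*k2 + (-3/4)*k1*k1*k1*k1*k2 + (-3/2)*k1*k1*k1*k1*k1*k2) * u^7) + ((-3/8)*k2*k2*k2 + (-4)*k2*k2*k2*k2 + (-3/8)*k1*k2*k2 + (3/2)*k1*k1*k1*k2*k2) * u^8) + ((-7/8)*k1*k2*k2*k2 + (4)*k1*k2*k2*k2*k2 + (-3/8)*k1*k1*k2*k2 + (4)*k1*k1*k2*k2*k2 + (-3/4)*k1*k1*k1*k2*k2 + (-3/2)*k1*k1*k1*k1*k2*k2)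 * u^9) + ((1/4)*k1*k2*k2*k2 + (1)*k1*k1*k2*k2*k2) * u^10) + ((-1/8)*k2*k2*k2*k2 + (1)*k2*k2*k2*k2*k2 + (-1/8)*k1*k2*k2*k2 + (1)*k1*k2*k2*k2*k2 + (-1/4)*k1*k1*k2*k2*k2 + (-1/2)*k1*k1*k1*k2*k2*k2) * u^11).
Definition W2 (k1 k2 u : R) : R := ((((((((((((24)) + ((12) + (24)*k1) * u^1) + ((2) + (24)*k1) * u^2) + ((24)*k2 + (6)*k1 + (12)*k1*k1) * u^3) + ((24)*k2 + (6)*k1*k1) * u^4) + ((6)*k2 + (24)*k1*k2 + (2)*k1*k1*k1) * u^5) + ((12)*k1*k2) * u^6) + ((12)*k2*k2 + (6)*k1*k1*k2) * u^7) + ((6)*k2*k2) * u^8) + ((6)*k1*k2*k2) * u^9) + ((2)*k2*k2*k2) * u^11).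
Definition R3 (k1 k2 u : R) : R := (((((((-11/2)*k1*k2 + (-1/4)*k1*k1 + (-4)*k1*k1*k2 + (7/2)*k1*k1*k1 + (7)*k1*k1*k1*k1 + (4)*k1*k1*k1*k1*k1) * u^1 + ((-27/16)*k2*k2 + (-3/16)*k1*k2 + (-9/4)*k1*k1*k2 + (-1/16)*k1*k1*k1 + (27/4)*k1*k1*k1*k2 + (51/8)*k1*k1*k1*k1 + (6)*k1*k1*k1*k1*k2 + (51/4)*k1*k1*k1*k1*k1 + (8)*k1*k1*k1*k1*k1*k1) * u^3) + ((-81/16)*k1*k2*k2 + (-27/32)*k1*k1*k2 + (-1/32)*k1*k1*k1 + (169/32)*k1*k1*k1*k2 + (45/64)*k1*k1*k1*k1 + (93/8)*k1*k1*k1*k1*k2 + (169/32)*k1*k1*k1*k1*k1 + (3/2)*k1*k1*k1*k1*k1*k2 + (181/16)*k1*k1*k1*k1*k1*k1 + (-4)*k1*k1*k1*k1*k1*k1*k2 + (39/4)*k1*k1*k1*k1*k1*k1*k1 + (2)*k1*k1*k1*k1*k1*k1*k1*k1) * u^5) + ((-243/256)*k2*k2*k2 + (-27/128)*k1*k2*k2 + (-3/256)*k1*k1*k2 + (-27/256)*k1*k1*k2*k2 + (33/256)*k1*k1*k1*k2 + (135/32)*k1*k1*k1*k2*k2 + (1/64)*k1*k1*k1*k1 + (403/64)*k1*k1*k1*k1*k2 + (173/256)*k1*k1*k1*k1*k1 + (775/64)*k1*k1*k1*k1*k1*k2 + (329/128)*k1*k1*k1*k1*k1*k1 + (129/16)*k1*k1*k1*k1*k1*k1*k2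 + (361/64)*k1*k1*k1*k1*k1*k1*k1 + (1)*k1*k1*k1*k1*k1*k1*k1*k2 + (49/8)*k1*k1*k1*k1*k1*k1*k1*k1 + (1)*k1*k1*k1*k1*k1*k1*k1*k1*k2 + (5/2)*k1*k1*k1*k1*k1*k1*k1*k1*k1) * u^7) + ((-729/512)*k1*k2*k2*k2 + (-405/1024)*k1*k1*k2*k2 + (-9/256)*k1*k1*k1*k2 + (729/256)*k1*k1*k1*k2*k2 + (-1/1024)*k1*k1*k1*k1 + (171/256)*k1*k1*k1*k1*k2 + (1215/256)*k1*k1*k1*k1*k2*k2 + (5/128)*k1*k1*k1*k1*k1 + (333/128)*k1*k1*k1*k1*k1*k2 + (81/64)*k1*k1*k1*k1*k1*k2*k2 + (15/64)*k1*k1*k1*k1*k1*k1 + (369/64)*k1*k1*k1*k1*k1*k1*k2 + (13/16)*k1*k1*k1*k1*k1*k1*k1 + (45/8)*k1*k1*k1*k1*k1*k1*k1*k2 + (13/8)*k1*k1*k1*k1*k1*k1*k1*k1 + (9/8)*k1*k1*k1*k1*k1*k1*k1*k1*k2 + (33/16)*k1*k1*k1*k1*k1*k1*k1*k1*k1 + (23/16)*k1*k1*k1*k1*k1*k1*k1*k1*k1*k1 + (1/4)*k1*k1*k1*k1*k1*k1*k1*k1*k1*k1*k1) * u^9) + ((-729/4096)*k2*k2*k2*k2 + (-243/4096)*k1*k2*k2*k2 + (-27/4096)*k1*k1*k2*k2 + (3159/4096)*k1*k1*k2*k2*k2 + (-1/4096)*k1*k1*k1*k2 + (1107/4096)*k1*k1*k1*k2*k2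 + (1215/1024)*k1*k1*k1*k2*k2*k2 + (129/4096)*k1*k1*k1*k1*k2 + (2025/2048)*k1*k1*k1*k1*k2*k2 + (5/4096)*k1*k1*k1*k1*k1 + (183/1024)*k1*k1*k1*k1*k1*k2 + (2079/1024)*k1*k1*k1*k1*k1*k2*k2 + (19/2048)*k1*k1*k1*k1*k1*k1 + (607/1024)*k1*k1*k1*k1*k1*k1*k2 + (459/256)*k1*k1*k1*k1*k1*k1*k2*k2 + (21/512)*k1*k1*k1*k1*k1*k1*k1 + (291/256)*k1*k1*k1*k1*k1*k1*k1*k2 + (59/512)*k1*k1*k1*k1*k1*k1*k1*k1 + (345/256)*k1*k1*k1*k1*k1*k1*k1*k1*k2 + (29/128)*k1*k1*k1*k1*k1*k1*k1*k1*k1 + (53/64)*k1*k1*k1*k1*k1*k1*k1*k1*k1*k2 + (39/128)*k1*k1*k1*k1*k1*k1*k1*k1*k1*k1 + (17/64)*k1*k1*k1*k1*k1*k1*k1*k1*k1*k1*k1 + (1/8)*k1*k1*k1*k1*k1*k1*k1*k1*k1*k1*k1*k1) * u^11).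
Definition W3 (k1 k2 u : R) : R := (((((((36)*k1) * u^1 + ((27)*k2 + (3)*k1 + (33)*k1*k1 + (12)*k1*k1*k1) * u^3) + ((81/2)*k1*k2 + (9/2)*k1*k1 + (63/4)*k1*k1*k1 + (18)*k1*k1*k1*k1) * u^5) + ((243/16)*k2*k2 + (27/8)*k1*k2 + (3/16)*k1*k1 + (351/16)*k1*k1*k2 + (39/16)*k1*k1*k1 + (27/2)*k1*k1*k1*k2 + (45/8)*k1*k1*k1*k1 + (39/4)*k1*k1*k1*k1*k1 + (3)*k1*k1*k1*k1*k1*k1) * u^7) + ((729/64)*k1*k2*k2 + (81/32)*k1*k1*k2 + (9/64)*k1*k1*k1 + (81/16)*k1*k1*k1*k2 + (9/16)*k1*k1*k1*k1 + (81/8)*k1*k1*k1*k1*k2 + (27/16)*k1*k1*k1*k1*k1 + (9/4)*k1*k1*k1*k1*k1*k1 + (9/4)*k1*k1*k1*k1*k1*k1*k1) * u^9) + ((729/256)*k2*k2*k2 + (243/256)*k1*k2*k2 + (27/256)*k1*k1*k2 + (243/128)*k1*k1*k2*k2 + (1/256)*k1*k1*k1 + (27/64)*k1*k1*k1*k2 + (243/64)*k1*k1*k1*k2*k2 + (3/128)*k1*k1*k1*k1 + (81/64)*k1*k1*k1*k1*k2 + (3/32)*k1*k1*k1*k1*k1 + (27/16)*k1*k1*k1*k1*k1*k2 + (7/32)*k1*k1*k1*k1*k1*k1 + (27/16)*k1*k1*k1*k1*k1*k1*k2 + (3/8)*k1*k1*k1*k1*k1*k1*k1 + (3/8)*k1*k1*k1*k1*k1*k1*k1*k1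 + (1/4)*k1*k1*k1*k1*k1*k1*k1*k1*k1) * u^11).
Definition Np (k1 k2 u : R) : R := ((((3/4)*k1) + ((1/8)*k1 + (1/2)*k1*k1) * u^1) + ((9/16)*k2 + (1/16)*k1 + (1/8)*k1*k1 + (1/4)*k1*k1*k1) * u^2).
Definition Nq (k1 k2 u : R) : R := ((((3/4)*k1) + ((-1/8)*k1 + (-1/2)*k1*k1) * u^1) + ((9/16)*k2 + (1/16)*k1 + (1/8)*k1*k1 + (1/4)*k1*k1*k1) * u^2).

Ltac bo0 := match goal with
 | |- BO 0 (fun u => @?f u + @?g u) => apply (BO_plus 0 f g); bo0
 | |- BO 0 (fun u => ?c * u ^ ?i) => apply (BO_scal 0 c (fun u => u^i)); apply (BO_mono 0 i); [lia| apply BO_upow]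
 | |- BO 0 (fun u => ?c) => apply BO_const
 end.

Lemma BO5_frac (E T R W S : R -> R) :
  BO 0 R -> BO 0 W ->
  (forall u, 2 * (S u)^3 - 16 = u * W u) ->
  (forall u, S u <> 0 -> E u - T u = u^5 * (R u / (2 * (S u)^3))) ->
  BO 5 (fun u => E u - T u).
Proof.
  intros HR HW HSW HE.
  assert (HS : BO 1 (fun u => 2 * (S u)^3 - 16)).
  { apply BO_ext with (fun u => u * W u). exists 1; split; [lra|intros; rewrite HSW; auto].
    change 1%nat with (1+0)%nat. apply BO_mul; auto. apply BO_id. }
  assert (HS' : BO 1 (fun u => 2 * (S u)^3 - 16)) by auto.
  destruct (BO1_away (fun u => 2 * (S u)^3) 16 ltac:(lra) HS') as [d [Hd Hd']].
  apply BO_ext with (fun u => u^5 * (R u / (2 * (S u)^3))).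
  exists d; split; auto. intros u Hu. specialize (Hd' u Hu). rewrite HE; auto.
  intro H0. rewrite H0 in Hd'. simpl in Hd'. lra.
  rewrite <- (Nat.add_0_r 5) at 1. apply BO_mul. apply BO_upow.
  apply BO_div with 16; auto. lra.
Qed.

Lemma E1 k1 k2 : BO 5 (fun u => Mn (PKf k1 k2) (1-u) (PKf k1 k2 u) - Tp k1 k2 u).
Proof.
  apply (BO5_frac (fun u => Mn (PKf k1 k2) (1-u) (PKf k1 k2 u)) (Tp k1 k2) (R1 k1 k2) (W1 k1 k2)
     (fun u => (1-u) + PKf k1 k2 u)).
  - unfold R1. bo0.
  - unfold W1. bo0.
  - intros u. unfold W1, PKf. ring.
  - intros u Hu. unfold Mn, PKf, Tp, R1 in *. field. auto.
Qed.

Lemma E2 k1 k2 : BO 5 (fun u => Mn (PKf k1 k2) (PKf k1 k2 u) (1+u) - Tq k1 k2 u).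
Proof.
  apply (BO5_frac (fun u => Mn (PKf k1 k2) (PKf k1 k2 u) (1+u)) (Tq k1 k2) (R2 k1 k2) (W2 k1 k2)
     (fun u => PKf k1 k2 u + (1+u))).
  - unfold R2. bo0.
  - unfold W2. bo0.
  - intros u. cbv beta. unfold W2, PKf. ring.
  - intros u Hu. unfold Mn, PKf, Tq, R2 in *. field. auto.
Qed.

Lemma E3 k1 k2 : BO 5 (fun u => Mn (PKf k1 k2) (Tp k1 k2 u) (Tq k1 k2 u) - Tout k1 k2 u).
Proof.
  apply (BO5_frac (fun u => Mn (PKf k1 k2) (Tp k1 k2 u) (Tq k1 k2 u)) (Tout k1 k2) (R3 k1 k2) (W3 k1 k2)
     (fun u => Tp k1 k2 u + Tq k1 k2 u)).
  - unfold R3. bo0.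
  - unfold W3. bo0.
  - intros u. cbv beta. unfold W3, Tp, Tq. field.
  - intros u Hu. unfold Mn, PKf, Tq, Tp, Tout, R3 in *. field. intro H; apply Hu; lra.
Qed.

Lemma Near_Tp k1 k2 : Near (-1/2) (Tp k1 k2).
Proof.
  unfold Near. apply BO_ext with (fun u => u^2 * Np k1 k2 u). exists 1; split; [lra|]. intros u _. unfold Np, Tp. field.
  rewrite <- (Nat.add_0_r 2) at 1. apply BO_mul. apply BO_upow. unfold Np. bo0.
Qed.

Lemma Near_Tq k1 k2 : Near (1/2) (Tq k1 k2).
Proof.
  unfold Near. apply BO_ext with (fun u => u^2 * Nq k1 k2 u). exists 1; split; [lra|]. intros u _. unfold Nq, Tq. field.
  rewrite <- (Nat.add_0_r 2) at 1. apply BO_mul. apply BO_upow. unfold Nq. bo0.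
Qed.

Lemma cA_PKf k1 k2 u : cA (PKf k1 k2) u = PKf k1 k2 u.
Proof. unfold cA, Mn, PKf. replace (1 - u + (1 + u)) with 2 by ring. field. Qed.

Lemma PK_Tout k1 k2 u : PKf k1 k2 u - Tout k1 k2 u = ((3/8)*k2 + (-1/16)*k1 + (3/16)*k1*k1 + (1/4)*k1*k1*k1) * u^4.
Proof. unfold PKf, Tout. field. Qed.

Lemma PKf_Bv2 k1 k2 : Bv 2 (fun v => PKf k1 k2 v - 1).
Proof.
  exists (Rabs k1 + Rabs k2), 1. split; [lra|]. intros v Hv. unfold PKf.
  replace (1 + k1 * v ^ 2 + k2 * v ^ 4 - 1) with ((k1 + k2 * v^2) * v^2) by ring.
  rewrite Rabs_mult, <- RPow_abs. apply Rmult_le_compat_r. apply pow_le, Rabs_pos.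
  eapply Rle_trans. apply Rabs_triang. rewrite Rabs_mult, <- RPow_abs.
  assert (Rabs v ^ 2 <= 1) by (apply pow_le1; pose proof (Rabs_pos v); lra).
  pose proof (Rabs_pos k2). nra.
Qed.


Lemma Lo_BO5 f g : Lo 4 f -> BO 5 g -> Lo 4 (fun u => f u + g u).
Proof. intros. apply Lo_plus; auto. apply BO_succ_Lo; auto. Qed.

Lemma K_order4 K aK : is_mean K -> homogeneous_mean K -> stable_mean K -> sym_asymp_expansion K aK ->
  (3/8)*aK 2%nat + (-1/16)*aK 1%nat + (3/16)*aK 1%nat*aK 1%nat + (1/4)*aK 1%nat*aK 1%nat*aK 1%nat = 0.
Proof.
  intros Hm Hh Hs He.
  set (k1 := aK 1%nat). set (k2 := aK 2%nat).
  set (P := PKf k1 k2).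
  assert (Hn : (1 <= 2)%nat) by lia.
  pose proof (expansion_Lv K aK 2 Hm Hh He) as EK.
  pose proof (GX_Bv2 K aK Hm Hh He) as BK.
  pose proof (PKf_Bv2 k1 k2) as BP. fold P in BP.
  pose proof (a0_is_1 K aK Hm He) as H0.
  assert (D : Lv (2*2) (fun v => GX K v - P v - 0 * v^(2*2))).
  { apply Lv_ext with (fun v => GX K v - Psum aK 2 v). intros v. rewrite Psum2 by auto. unfold P, PKf, k1, k2. ring. auto. }
  pose proof (middle _ _ _ _ _ Hn EK BK D) as S1.
  destruct (Near_config _ BP) as [NA _].
  pose proof (core_near (GX K) P aK 2 0 0 _ (-1) _ (fun u => 1-u) (cA (GX K)) (fun u => 1-u) (cA P)
      Hn EK BK D (Lo_s _) S1 Near_s NA) as S2.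
  pose proof (core_near (GX K) P aK 2 0 _ 0 _ 1 (cA (GX K)) (fun u => 1+u) (cA P) (fun u => 1+u)
      Hn EK BK D S1 (Lo_t _) NA Near_t) as S3.
  match type of S2 with Lo _ (fun u => _ - ?k * _) => set (kp := k) in S2 end.
  match type of S3 with Lo _ (fun u => _ - ?k * _) => set (kq := k) in S3 end.
  assert (S2' : Lo (2*2) (fun u => Mn (GX K) (1-u) (cA (GX K) u) - Tp k1 k2 u - kp * u^(2*2))).
  { apply Lo_ext with (fun u => (Mn (GX K) (1 - u) (cA (GX K) u) - Mn P (1 - u) (cA P u) - kp * u ^ (2 * 2))
        + (Mn P (1-u) (P u) - Tp k1 k2 u)).
    exists 1; split; [lra|]. intros u _. unfold P. rewrite cA_PKf. ring.
    apply Lo_BO5; auto. apply E1. }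
  assert (S3' : Lo (2*2) (fun u => Mn (GX K) (cA (GX K) u) (1+u) - Tq k1 k2 u - kq * u^(2*2))).
  { apply Lo_ext with (fun u => (Mn (GX K) (cA (GX K) u) (1+u) - Mn P (cA P u) (1+u) - kq * u ^ (2 * 2))
        + (Mn P (P u) (1+u) - Tq k1 k2 u)).
    exists 1; split; [lra|]. intros u _. unfold P. rewrite cA_PKf. ring.
    apply Lo_BO5; auto. apply E2. }
  pose proof (core_near (GX K) P aK 2 0 kp kq (-1/2) (1/2) (fun u => Mn (GX K) (1-u) (cA (GX K) u))
      (fun u => Mn (GX K) (cA (GX K) u) (1+u)) (Tp k1 k2) (Tq k1 k2)
      Hn EK BK D S2' S3' (Near_Tp k1 k2) (Near_Tq k1 k2)) as S4.
  match type of S4 with Lo _ (fun u => _ - ?k * _) => set (k4 := k) in S4 end.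
  set (lam := (3/8)*k2 + (-1/16)*k1 + (3/16)*k1*k1 + (1/4)*k1*k1*k1).
  assert (S4' : Lo (2*2) (fun u => (cO (GX K) u - P u) - (k4 - lam) * u^(2*2))).
  { apply Lo_ext with (fun u => (Mn (GX K) (Mn (GX K) (1 - u) (cA (GX K) u)) (Mn (GX K) (cA (GX K) u) (1 + u)) -
        Mn P (Tp k1 k2 u) (Tq k1 k2 u) - k4 * u ^ (2 * 2)) + (Mn P (Tp k1 k2 u) (Tq k1 k2 u) - Tout k1 k2 u)).
    exists 1; split; [lra|]. intros u _. unfold cO, cP, cQ. pose proof (PK_Tout k1 k2 u). fold P in H.
    fold lam in H. replace (2*2)%nat with 4%nat by reflexivity. lra.
    apply Lo_BO5; auto. apply E3. }
  match type of S1 with Lo _ (fun u => _ - ?k * _) => set (k0 := k) in S1 end.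
  assert (Heq : k0 = k4 - lam).
  { apply (Lo_combine _ _ _ _ _ S1 S4'). exists 1; split; [lra|]. intros u Hu.
    rewrite (stable_Mn K Hm Hh Hs u Hu). unfold P. rewrite cA_PKf. reflexivity. }
  unfold k4, kq, kp, k0 in *. rewrite !Rmult_0_l in Heq. fold lam. lra.
Qed.

Theorem mainTheorem12 (K N M : R -> R -> R) (aK aN aM : nat -> R) :
  is_mean K -> symmetric_mean K -> homogeneous_mean K -> stable_mean K ->
  is_mean N -> symmetric_mean N -> homogeneous_mean N -> stable_mean N ->
  is_mean M -> symmetric_mean M -> homogeneous_mean M ->
  sym_asymp_expansion K aK -> sym_asymp_expansion N aN ->
  sym_asymp_expansion M aM ->
  stabilizable K N M -> stabilized K N M ->
  (aK 1%nat = aN 1%nat /\ aN 1%nat = aM 1%nat) /\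
  (forall n : nat, aK n = aN n) /\
  aM 2%nat = 1 / 6 * aM 1%nat * (1 + aM 1%nat) * (1 - 4 * aM 1%nat).
Proof.
  intros HmK _ HhK HsK HmN _ HhN HsN HmM _ HhM HeK HeN HeM Hsz Hsd.
  destruct (a1_facts K N M aK aN aM HmK HhK HeK HmN HhN HeN HmM HhM HeM Hsz Hsd) as [E1 E2].
  assert (HKN : forall n, aK n = aN n) by (apply (unique_all K N); auto; lra).
  pose proof (M_same_K K N M aK aN aM HmK HhK HsK HeK HmN HhN HeN HmM HhM HeM Hsd HKN) as HMK.
  pose proof (K_order4 K aK HmK HhK HsK HeK) as H4.
  split; [split; lra|]. split; auto.
  rewrite (HMK 2%nat), (HMK 1%nat).
  assert (1 / 6 * aK 1%nat * (1 + aK 1%nat) * (1 - 4 * aK 1%nat) =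
          (1/6) * aK 1%nat + (-1/2) * (aK 1%nat * aK 1%nat) + (-2/3) * (aK 1%nat * aK 1%nat * aK 1%nat)) by field.
  rewrite H. lra.
Qed.
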